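(* Let $n\ge2$ and $G=\mathbb{R}^n\setminus\overline{\mathbb{B}^n}$, where $\mathbb{B}^n$ is the open unit ball. Then $G$ is uniform and \[ \frac{\pi}{\log3}\le A_G\le\frac{4\pi}{\log3}. \]
   Context: For a domain $G\subsetneq\mathbb{R}^n$ let $d_G(x)=d(x,\partial G)$; $k_G(x,y)=\inf_\gamma\int_\gamma\frac{|dx|}{d_G(x)}$ over rectifiable curves $\gamma\subset G$ joining $x,y$ (quasihyperbolic distance); $j_G(x,y)=\log\left(1+\frac{|x-y|}{\min\{d_G(x),d_G(y)\}}\right)$; the uniformity constant is $A_G=\inf\{A\ge1: k_G\le A\,j_G\text{ on }G\times G\}$ (with $\inf\emptyset=+\infty$), and $G$ is uniform if $A_G<\infty$. *)

(* Defs.v *)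
From Stdlib Require Import Reals Lra Classical ClassicalEpsilon.
Open Scope R_scope.

(* Points of R^n are represented as functions nat -> R; only the first n
   coordinates x 0, ..., x (n-1) are ever used (norm / distance below). *)
Definition Rn := nat -> R.

Fixpoint sumsq (n : nat) (x : Rn) : R :=
  match n with
  | O => 0
  | S m => sumsq m x + (x m) ^ 2
  end.

Definition norm (n : nat) (x : Rn) : R := sqrt (sumsq n x).
Definition dist (n : nat) (x y : Rn) : R := norm n (fun i => x i - y i).

(* Infimum of a set of reals (meaningful when nonempty and bounded below;
   default value 0 otherwise). *)
Lemma Inf_bound (E : R -> Prop) :
  (exists m, forall x, E x -> m <= x) -> bound (fun y => E (- y)).
Proof.
  intros [m Hm]. exists (- m). intros y Hy. specialize (Hm _ Hy). lra.
Qed.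

Lemma Inf_ne (E : R -> Prop) : (exists x, E x) -> exists y, E (- y).
Proof.
  intros [x Hx]. exists (- x). rewrite Ropp_involutive. exact Hx.
Qed.

Definition Inf (E : R -> Prop) : R :=
  match excluded_middle_informative
          ((exists m, forall x, E x -> m <= x) /\ (exists x, E x)) with
  | left H =>
      - proj1_sig (completeness (fun y => E (- y))
                     (Inf_bound E (proj1 H)) (Inf_ne E (proj2 H)))
  | right _ => 0
  end.

Definition closure_pt (n : nat) (G : Rn -> Prop) (z : Rn) : Prop :=
  forall eps, 0 < eps -> exists w, G w /\ dist n w z < eps.
Definition interior_pt (n : nat) (G : Rn -> Prop) (z : Rn) : Prop :=
  exists eps, 0 < eps /\ forall w, dist n w z < eps -> G w.
Definition boundary_pt (n : nat) (G : Rn -> Prop) (z : Rn) : Prop :=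
  closure_pt n G z /\ ~ interior_pt n G z.

Definition dG (n : nat) (G : Rn -> Prop) (x : Rn) : R :=
  Inf (fun r => exists z, boundary_pt n G z /\ r = dist n x z).

(* Quasihyperbolic distance: infimum of  int_gamma |dx| / d_G(x)  over
   rectifiable curves in G joining x and y.  Rectifiable curves are taken
   in arc-length-type parametrization: gamma : [0,L] -> G 1-Lipschitz,
   and the integral is  int_0^L ds / d_G(gamma s)  (Riemann integral). *)
Definition kG (n : nat) (G : Rn -> Prop) (x y : Rn) : R :=
  Inf (fun v => exists (L : R) (gam : R -> Rn),
         0 <= L /\ gam 0 = x /\ gam L = y /\
         (forall s t, 0 <= s <= L -> 0 <= t <= L ->
            dist n (gam s) (gam t) <= Rabs (s - t)) /\
         (forall s, 0 <= s <= L -> G (gam s)) /\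
         exists pr : Riemann_integrable (fun s => / dG n G (gam s)) 0 L,
           v = RiemannInt pr).

Definition jG (n : nat) (G : Rn -> Prop) (x y : Rn) : R :=
  ln (1 + dist n x y / Rmin (dG n G x) (dG n G y)).

Definition unif_const (n : nat) (G : Rn -> Prop) (A : R) : Prop :=
  1 <= A /\ forall x y, G x -> G y -> kG n G x y <= A * jG n G x y.

Definition uniform (n : nat) (G : Rn -> Prop) : Prop :=
  exists A, unif_const n G A.

(* A_G (only meaningful when G is uniform; inf of the empty set = +oo
   is not represented, uniformity is asserted separately). *)
Definition AG (n : nat) (G : Rn -> Prop) : R := Inf (unif_const n G).

Definition ext_ball (n : nat) : Rn -> Prop := fun x => 1 < norm n x.

(* Main.v *)
From Coquelicot Require Import Coquelicot.
From Stdlib Require Import Reals Lra Lia Psatz Classical ClassicalEpsilon FunctionalExtensionality Machin.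
Require Import Defs.
Open Scope R_scope.

Fixpoint ip (n : nat) (x y : Rn) : R :=
  match n with O => 0 | S m => ip m x y + x m * y m end.

Lemma sumsq_ip n x : sumsq n x = ip n x x.
Proof. induction n; simpl; [reflexivity| rewrite IHn; ring]. Qed.

Lemma ip_sym n x y : ip n x y = ip n y x.
Proof. induction n; simpl; [reflexivity| rewrite IHn; ring]. Qed.

Lemma ip_lin n a b x y z :
  ip n (fun i => a * x i + b * y i) z = a * ip n x z + b * ip n y z.
Proof. induction n; simpl; [ring| rewrite IHn; ring]. Qed.

Lemma ip_ext n x x' y y' : (forall i, (i < n)%nat -> x i = x' i) ->
  (forall i, (i < n)%nat -> y i = y' i) -> ip n x y = ip n x' y'.
Proof.
  induction n; intros; simpl; [reflexivity|].
  rewrite IHn by (intros; apply H || apply H0; lia).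
  rewrite H, H0 by lia. reflexivity.
Qed.

Lemma ip_self_ge0 n x : 0 <= ip n x x.
Proof. induction n; simpl; nra. Qed.

Lemma CS_sq n x y : (ip n x y)^2 <= ip n x x * ip n y y.
Proof.
  induction n; simpl; [lra|].
  pose proof (ip_self_ge0 n x). pose proof (ip_self_ge0 n y).
  set (A := ip n x y) in *. set (X := ip n x x) in *. set (Y := ip n y y) in *.
  set (a := x n). set (b := y n).
  assert (H2 : 2 * A * a * b <= X * b^2 + Y * a^2).
  { assert (0 <= X * b ^ 2 + Y * a ^ 2) by nra.
    assert ((2*A*a*b)^2 <= (X * b^2 + Y * a^2)^2).
    { assert (4 * X * Y * a^2 * b^2 <= (X * b^2 + Y * a^2)^2).
      { assert (0 <= (X*b^2 - Y*a^2)^2) by apply pow2_ge_0. lra. }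
      assert (A^2 * (a^2*b^2) <= X*Y * (a^2*b^2)). { apply Rmult_le_compat_r; [nra | exact IHn]. } nra. }
    destruct (Rle_dec (2*A*a*b) 0); [lra|]. nra. }
  nra.
Qed.

Definition nrm n x := sqrt (ip n x x).

Lemma norm_nrm n x : norm n x = nrm n x.
Proof. unfold norm, nrm; rewrite sumsq_ip; reflexivity. Qed.

Lemma nrm_ge0 n x : 0 <= nrm n x.
Proof. apply sqrt_pos. Qed.

Lemma nrm_sq n x : nrm n x ^ 2 = ip n x x.
Proof. unfold nrm. rewrite <- Rsqr_pow2. apply Rsqr_sqrt, ip_self_ge0. Qed.

Lemma CSineq n x y : Rabs (ip n x y) <= nrm n x * nrm n y.
Proof.
  pose proof (nrm_sq n x); pose proof (nrm_sq n y); pose proof (CS_sq n x y).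
  pose proof (nrm_ge0 n x); pose proof (nrm_ge0 n y).
  assert (Rabs (ip n x y) ^ 2 = ip n x y ^ 2) by (rewrite <- !Rsqr_pow2; symmetry; apply Rsqr_abs).
  pose proof (Rabs_pos (ip n x y)).
  destruct (Rle_dec (Rabs (ip n x y)) (nrm n x * nrm n y)); auto.
  assert (0 <= nrm n x * nrm n y) by nra. nra.
Qed.

Lemma CS_le n x y : ip n x y <= nrm n x * nrm n y.
Proof. pose proof (CSineq n x y). pose proof (Rle_abs (ip n x y)). lra. Qed.
Lemma CS_ge n x y : - (nrm n x * nrm n y) <= ip n x y.
Proof. pose proof (CSineq n x y). pose proof (Rabs_maj2 (ip n x y)). lra. Qed.

Lemma nrm_unique n x r : 0 <= r -> r ^ 2 = ip n x x -> nrm n x = r.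
Proof.
  intros H1 H2. unfold nrm. rewrite <- H2. rewrite <- Rsqr_pow2. apply sqrt_Rsqr; auto.
Qed.

Lemma nrm_le_iff n x r : 0 <= r -> ip n x x <= r ^ 2 -> nrm n x <= r.
Proof.
  intros H1 H2. pose proof (nrm_sq n x). pose proof (nrm_ge0 n x).
  destruct (Rle_dec (nrm n x) r); auto. nra.
Qed.

Lemma nrm_ge_iff n x r : 0 <= r -> r ^ 2 <= ip n x x -> r <= nrm n x.
Proof.
  intros H1 H2. pose proof (nrm_sq n x). pose proof (nrm_ge0 n x).
  destruct (Rle_dec r (nrm n x)); auto. nra.
Qed.

Lemma nrm_scal n c x : nrm n (fun i => c * x i) = Rabs c * nrm n x.
Proof.
  apply nrm_unique. apply Rmult_le_pos; [apply Rabs_pos|apply nrm_ge0].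
  replace (ip n (fun i => c * x i) (fun i => c * x i)) with (c * c * ip n x x).
  - rewrite <- nrm_sq. rewrite Rpow_mult_distr. rewrite pow2_abs. ring.
  - induction n; simpl; [ring| rewrite <- IHn; ring].
Qed.

Lemma ip_add_l n x y z : ip n (fun i => x i + y i) z = ip n x z + ip n y z.
Proof. induction n; simpl; [ring| rewrite IHn; ring]. Qed.
Lemma ip_add_r n x y z : ip n z (fun i => x i + y i) = ip n z x + ip n z y.
Proof. rewrite ip_sym, ip_add_l, !(ip_sym n z). ring. Qed.
Lemma ip_sub_l n x y z : ip n (fun i => x i - y i) z = ip n x z - ip n y z.
Proof. induction n; simpl; [ring| rewrite IHn; ring]. Qed.
Lemma ip_sub_r n x y z : ip n z (fun i => x i - y i) = ip n z x - ip n z y.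
Proof. rewrite ip_sym, ip_sub_l, !(ip_sym n z). ring. Qed.
Lemma ip_scal_l n c x z : ip n (fun i => c * x i) z = c * ip n x z.
Proof. induction n; simpl; [ring| rewrite IHn; ring]. Qed.
Lemma ip_scal_r n c x z : ip n z (fun i => c * x i) = c * ip n z x.
Proof. rewrite ip_sym, ip_scal_l, (ip_sym n z). ring. Qed.

Lemma nrm_tri n x y : nrm n (fun i => x i + y i) <= nrm n x + nrm n y.
Proof.
  apply nrm_le_iff. pose proof (nrm_ge0 n x); pose proof (nrm_ge0 n y); lra.
  rewrite ip_add_l, !ip_add_r. rewrite (ip_sym n y x).
  pose proof (CS_le n x y). rewrite <- !nrm_sq. nra.
Qed.

Definition dst n x y := nrm n (fun i => x i - y i).
Lemma dist_dst n x y : dist n x y = dst n x y.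
Proof. unfold dist, dst. apply norm_nrm. Qed.

Lemma dst_sym n x y : dst n x y = dst n y x.
Proof.
  unfold dst. replace (fun i => y i - x i) with (fun i => (-1) * (x i - y i)).
  rewrite nrm_scal. assert (Hm : Rabs (-1) = 1) by (unfold Rabs; destruct Rcase_abs; lra). rewrite Hm; ring.
  apply functional_extensionality; intros; ring.
Qed.

Lemma dst_tri n x y z : dst n x z <= dst n x y + dst n y z.
Proof.
  unfold dst. replace (fun i => x i - z i) with (fun i => (x i - y i) + (y i - z i)).
  apply nrm_tri. apply functional_extensionality; intros; ring.
Qed.

Lemma nrm_rev n x y : Rabs (nrm n x - nrm n y) <= dst n x y.
Proof.
  assert (nrm n x <= nrm n y + dst n x y).
  { unfold dst. replace x with (fun i => y i + (x i - y i)) at 1.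
    apply nrm_tri. apply functional_extensionality; intros; ring. }
  assert (nrm n y <= nrm n x + dst n x y).
  { rewrite dst_sym. unfold dst. replace y with (fun i => x i + (y i - x i)) at 1.
    apply nrm_tri. apply functional_extensionality; intros; ring. }
  apply Rabs_le; lra.
Qed.

Lemma dst_sq n x y : dst n x y ^ 2 = nrm n x ^ 2 + nrm n y ^ 2 - 2 * ip n x y.
Proof.
  unfold dst. rewrite !nrm_sq. rewrite ip_sub_l, !ip_sub_r. rewrite (ip_sym n y x). ring.
Qed.

Lemma Inf_le (E : R -> Prop) v : (exists m, forall x, E x -> m <= x) -> E v -> Inf E <= v.
Proof.
  intros Hb Hv. unfold Inf.
  destruct excluded_middle_informative as [H|H].
  - destruct completeness as [m [Hm1 Hm2]]; simpl.
    assert (- v <= m). { apply Hm1. rewrite Ropp_involutive. exact Hv. } lra.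
  - exfalso. apply H. split; eauto.
Qed.

Lemma Inf_ge (E : R -> Prop) b : (exists x, E x) -> (forall x, E x -> b <= x) -> b <= Inf E.
Proof.
  intros Hn Hb. unfold Inf.
  destruct excluded_middle_informative as [H|H].
  - destruct completeness as [m [Hm1 Hm2]]; simpl.
    assert (m <= - b). { apply Hm2. intros y Hy. specialize (Hb _ Hy). lra. } lra.
  - exfalso. apply H. split; eauto.
Qed.

Lemma Inf_le_eps (E : R -> Prop) b : (exists m, forall x, E x -> m <= x) ->
  (forall eps, 0 < eps -> exists v, E v /\ v <= b + eps) -> Inf E <= b.
Proof.
  intros Hb He. unfold Inf.
  destruct excluded_middle_informative as [H|H].
  - destruct completeness as [m [Hm1 Hm2]]; simpl.
    destruct (Rle_dec (-m) b) as [h|h]; auto. exfalso.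
    destruct (He ((-m - b)/2)) as [v [Hv1 Hv2]]. lra.
    assert (- v <= m). { apply Hm1. rewrite Ropp_involutive. exact Hv1. } lra.
  - exfalso. apply H. split; auto. destruct (He 1) as [v [Hv _]]; [lra|]. eauto.
Qed.

Definition G n := ext_ball n.

Lemma G_nrm n x : G n x <-> 1 < nrm n x.
Proof. unfold G, ext_ball. rewrite norm_nrm. tauto. Qed.

Lemma dst_scal_self n c z : dst n (fun i => c * z i) z = Rabs (c - 1) * nrm n z.
Proof.
  unfold dst. rewrite <- nrm_scal. f_equal. apply functional_extensionality; intros; ring.
Qed.

Lemma nrm_scal_pos n c z : 0 <= c -> nrm n (fun i => c * z i) = c * nrm n z.
Proof. intros. rewrite nrm_scal, Rabs_pos_eq; auto. Qed.

Lemma bdry_nrm n z : boundary_pt n (G n) z -> nrm n z = 1.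
Proof.
  intros [Hc Hi].
  destruct (Rtotal_order (nrm n z) 1) as [h|[h|h]]; auto; exfalso.
  - destruct (Hc (1 - nrm n z)) as [w [Hw Hd]]; [lra|].
    apply G_nrm in Hw. rewrite dist_dst in Hd. pose proof (nrm_rev n w z).
    pose proof (Rle_abs (nrm n w - nrm n z)). lra.
  - apply Hi. exists (nrm n z - 1). split; [lra|]. intros w Hd.
    apply G_nrm. rewrite dist_dst in Hd. pose proof (nrm_rev n w z).
    pose proof (Rabs_maj2 (nrm n w - nrm n z)). lra.
Qed.

Lemma unit_bdry n z : nrm n z = 1 -> boundary_pt n (G n) z.
Proof.
  intros Hz. split.
  - intros eps He. exists (fun i => (1 + eps/2) * z i). split.
    + apply G_nrm. rewrite nrm_scal_pos by lra. rewrite Hz. lra.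
    + rewrite dist_dst, dst_scal_self, Hz. rewrite Rabs_pos_eq; lra.
  - intros [eps [He Hw]].
    set (t := Rmin (eps/2) (1/2)).
    assert (0 < t /\ t <= eps/2 /\ t <= 1/2) as [t1 [t2 t3]].
    { unfold t; split; [apply Rmin_glb_lt; lra|split; [apply Rmin_l|apply Rmin_r]]. }
    specialize (Hw (fun i => (1 - t) * z i)).
    assert (G n (fun i => (1 - t) * z i)).
    { apply Hw. rewrite dist_dst, dst_scal_self, Hz. rewrite Rabs_left; lra. }
    apply G_nrm in H. rewrite nrm_scal_pos in H by lra. rewrite Hz in H. lra.
Qed.

Lemma dG_eq n x : G n x -> dG n (G n) x = nrm n x - 1.
Proof.
  intros Hx. apply G_nrm in Hx. unfold dG.
  set (z0 := fun i => / nrm n x * x i).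
  assert (Hz0 : nrm n z0 = 1).
  { unfold z0. rewrite nrm_scal_pos. field. lra. left; apply Rinv_0_lt_compat; lra. }
  assert (Hd0 : dist n x z0 = nrm n x - 1).
  { rewrite dist_dst, dst_sym. unfold z0. rewrite dst_scal_self.
    rewrite Rabs_left1. field. lra.
    assert (/ nrm n x < 1). { rewrite <- Rinv_1; apply Rinv_lt_contravar; lra. } lra. }
  apply Rle_antisym.
  - apply Inf_le.
    + exists 0. intros r [z [_ ->]]. rewrite dist_dst. apply nrm_ge0.
    + exists z0. split; auto. apply unit_bdry; auto.
  - apply Inf_ge.
    + exists (nrm n x - 1), z0. split; auto. apply unit_bdry; auto.
    + intros r [z [Hb ->]]. apply bdry_nrm in Hb. rewrite dist_dst.
      pose proof (nrm_rev n x z). pose proof (Rle_abs (nrm n x - nrm n z)). lra.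
Qed.

Definition lipc n L (gam : R -> Rn) := forall s t, 0 <= s <= L -> 0 <= t <= L ->
  dist n (gam s) (gam t) <= Rabs (s - t).

Definition CS n x y : R -> Prop := fun v => exists (L : R) (gam : R -> Rn),
         0 <= L /\ gam 0 = x /\ gam L = y /\
         (forall s t, 0 <= s <= L -> 0 <= t <= L ->
            dist n (gam s) (gam t) <= Rabs (s - t)) /\
         (forall s, 0 <= s <= L -> G n (gam s)) /\
         exists pr : Riemann_integrable (fun s => / dG n (G n) (gam s)) 0 L,
           v = RiemannInt pr.

Lemma kG_CS n x y : kG n (G n) x y = Inf (CS n x y).
Proof. reflexivity. Qed.

Definition clamp L s := Rmax 0 (Rmin L s).
Lemma clamp_in L s : 0 <= L -> 0 <= clamp L s <= L.
Proof. intros. unfold clamp, Rmax, Rmin. repeat destruct Rle_dec; lra. Qed.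
Lemma clamp_id L s : 0 <= s <= L -> clamp L s = s.
Proof. intros. unfold clamp, Rmax, Rmin. repeat destruct Rle_dec; lra. Qed.
Lemma clamp_lip L s t : 0 <= L -> Rabs (clamp L s - clamp L t) <= Rabs (s - t).
Proof.
  intros. unfold clamp, Rmax, Rmin. apply Rabs_le.
  pose proof (Rabs_maj2 (s-t)); pose proof (Rle_abs (s-t)).
  repeat destruct Rle_dec; lra.
Qed.

Lemma lip_cont (h : R -> R) x : (forall s t, Rabs (h s - h t) <= Rabs (s - t)) ->
  continuity_pt h x.
Proof.
  intros Hh eps He. exists eps. split; auto. intros y [_ Hy].
  simpl in *. unfold R_dist in *. eapply Rle_lt_trans; [apply Hh|]. auto.
Qed.

Lemma integrand_cont n L gam z : 0 <= L -> lipc n L gam ->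
  (forall s, 0 <= s <= L -> G n (gam s)) ->
  continuous (fun s => / (nrm n (gam (clamp L s)) - 1)) z.
Proof.
  intros HL Hlip HG. apply continuity_pt_filterlim.
  set (h := fun s => nrm n (gam (clamp L s))).
  assert (Hh : forall s t, Rabs (h s - h t) <= Rabs (s - t)).
  { intros s t. unfold h. eapply Rle_trans; [apply nrm_rev|].
    rewrite <- dist_dst. eapply Rle_trans; [apply Hlip; apply clamp_in; auto|].
    apply clamp_lip; auto. }
  change (continuity_pt (fun s => / (h s - 1)) z).
  apply (continuity_pt_inv (fun s => h s - 1)).
  - apply continuity_pt_minus. apply lip_cont; auto. apply continuity_pt_const. intros a b; reflexivity.
  - unfold h. pose proof (HG _ (clamp_in L z HL)). apply G_nrm in H. lra.
Qed.

Lemma integrand_ex n L gam : 0 <= L -> lipc n L gam ->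
  (forall s, 0 <= s <= L -> G n (gam s)) ->
  ex_RInt (fun s => / (nrm n (gam s) - 1)) 0 L.
Proof.
  intros HL Hlip HG.
  apply ex_RInt_ext with (fun s => / (nrm n (gam (clamp L s)) - 1)).
  - intros x Hx. rewrite Rmin_left, Rmax_right in Hx by lra. rewrite clamp_id; auto. lra.
  - apply (@ex_RInt_continuous R_CompleteNormedModule). intros; apply integrand_cont; auto.
Qed.

Lemma CS_intro n x y L gam : 0 <= L -> gam 0 = x -> gam L = y -> lipc n L gam ->
  (forall s, 0 <= s <= L -> G n (gam s)) ->
  CS n x y (RInt (fun s => / (nrm n (gam s) - 1)) 0 L).
Proof.
  intros HL H0 H1 Hlip HG.
  assert (Hex : ex_RInt (fun s => / dG n (G n) (gam s)) 0 L).
  { apply ex_RInt_ext with (fun s => / (nrm n (gam s) - 1)).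
    - intros s Hs. rewrite Rmin_left, Rmax_right in Hs by lra. rewrite dG_eq; auto. apply HG; lra.
    - apply integrand_ex; auto. }
  exists L, gam. repeat split; auto.
  exists (ex_RInt_Reals_0 _ _ _ Hex). rewrite <- RInt_Reals.
  apply RInt_ext. intros s Hs. rewrite Rmin_left, Rmax_right in Hs by lra. rewrite dG_eq; auto. apply HG; lra.
Qed.

Lemma CS_val n x y v : CS n x y v -> exists L gam, 0 <= L /\ gam 0 = x /\ gam L = y /\
  lipc n L gam /\ (forall s, 0 <= s <= L -> G n (gam s)) /\
  v = RInt (fun s => / (nrm n (gam s) - 1)) 0 L.
Proof.
  intros [L [gam [HL [H0 [H1 [Hlip [HG [pr Hv]]]]]]]].
  exists L, gam. repeat split; auto. rewrite Hv, <- RInt_Reals.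
  apply RInt_ext. intros s Hs. rewrite Rmin_left, Rmax_right in Hs by lra. rewrite dG_eq; auto. apply HG; lra.
Qed.

Lemma CS_ge0 n x y v : CS n x y v -> 0 <= v.
Proof.
  intros H. destruct (CS_val _ _ _ _ H) as [L [gam [HL [_ [_ [Hlip [HG ->]]]]]]].
  apply RInt_ge_0; auto. apply integrand_ex; auto.
  intros s Hs. pose proof (HG s ltac:(lra)). apply G_nrm in H0.
  left. apply Rinv_0_lt_compat. lra.
Qed.

Lemma CS_bdd n x y : exists m, forall v, CS n x y v -> m <= v.
Proof. exists 0. apply CS_ge0. Qed.

Lemma CS_concat n x y z v1 v2 : CS n x y v1 -> CS n y z v2 -> CS n x z (v1 + v2).
Proof.
  intros C1 C2.
  destruct (CS_val _ _ _ _ C1) as [L1 [g1 [HL1 [H10 [H11 [Hlip1 [HG1 ->]]]]]]].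
  destruct (CS_val _ _ _ _ C2) as [L2 [g2 [HL2 [H20 [H21 [Hlip2 [HG2 ->]]]]]]].
  set (g := fun s => if Rle_dec s L1 then g1 s else g2 (s - L1)).
  assert (E1 : forall s, s <= L1 -> g s = g1 s).
  { intros s Hs. unfold g. destruct Rle_dec; [reflexivity| lra]. }
  assert (E2 : forall s, L1 < s -> g s = g2 (s - L1)).
  { intros s Hs. unfold g. destruct Rle_dec; [lra| reflexivity]. }
  assert (Hlip : lipc n (L1 + L2) g).
  { intros s t Hs Ht. rewrite !dist_dst.
    destruct (Rle_dec s L1) as [hs|hs]; destruct (Rle_dec t L1) as [ht|ht].
    - rewrite E1, E1 by auto. rewrite <- dist_dst. apply Hlip1; lra.
    - rewrite E1, E2 by lra. eapply Rle_trans; [apply (dst_tri n _ (g1 L1))|].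
      rewrite H11, <- H20, <- !dist_dst.
      pose proof (Hlip1 s L1 ltac:(lra) ltac:(lra)). pose proof (Hlip2 0 (t - L1) ltac:(lra) ltac:(lra)).
      rewrite (Rabs_left1 (s - L1)) in H by lra. rewrite (Rabs_left1 (0 - (t-L1))) in H0 by lra.
      rewrite H11, <- H20 in H. rewrite Rabs_left1 by lra. lra.
    - rewrite E2, E1 by lra. eapply Rle_trans; [apply (dst_tri n _ (g1 L1))|].
      rewrite H11, <- H20, <- !dist_dst.
      pose proof (Hlip1 L1 t ltac:(lra) ltac:(lra)). pose proof (Hlip2 (s - L1) 0 ltac:(lra) ltac:(lra)).
      rewrite (Rabs_right (L1 - t)) in H by lra. rewrite (Rabs_right (s - L1 - 0)) in H0 by lra.
      rewrite H11, <- H20 in H. rewrite Rabs_right by lra. lra.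
    - rewrite E2, E2 by lra. rewrite <- dist_dst.
      replace (s - t) with ((s - L1) - (t - L1)) by ring. apply Hlip2; lra. }
  assert (HG : forall s, 0 <= s <= L1 + L2 -> G n (g s)).
  { intros s Hs. destruct (Rle_dec s L1).
    - rewrite E1 by auto. apply HG1; lra.
    - rewrite E2 by lra. apply HG2; lra. }
  assert (Hend : g (L1 + L2) = z).
  { destruct (Rle_dec (L1 + L2) L1).
    - rewrite E1 by auto. assert (L2 = 0) by lra. subst L2. rewrite Rplus_0_r, H11, <- H20. auto.
    - rewrite E2 by lra. replace (L1 + L2 - L1) with L2 by ring. auto. }
  assert (Hst : g 0 = x) by (rewrite E1 by lra; auto).
  pose proof (CS_intro n x z (L1 + L2) g ltac:(lra) Hst Hend Hlip HG) as C.
  replace (RInt (fun s => / (nrm n (g1 s) - 1)) 0 L1 + RInt (fun s => / (nrm n (g2 s) - 1)) 0 L2)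
    with (RInt (fun s => / (nrm n (g s) - 1)) 0 (L1 + L2)); auto.
  pose proof (integrand_ex n L1 g1 HL1 Hlip1 HG1) as X1.
  pose proof (integrand_ex n L2 g2 HL2 Hlip2 HG2) as X2.
  pose proof (integrand_ex n (L1+L2) g ltac:(lra) Hlip HG) as X.
  rewrite <- (RInt_Chasles _ 0 L1 (L1+L2)).
  - change plus with Rplus. f_equal.
    + apply RInt_ext. intros s Hs. rewrite Rmin_left, Rmax_right in Hs by lra. rewrite E1 by lra. auto.
    + transitivity (RInt (fun y => scal 1 ((fun s => / (nrm n (g2 s) - 1)) (1*y + -L1))) L1 (L1+L2)).
      * apply RInt_ext. intros s Hs. rewrite Rmin_left, Rmax_right in Hs by lra. rewrite E2 by lra.
        replace (1 * s + - L1) with (s - L1) by ring. unfold scal; simpl; unfold mult; simpl. ring.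
      * etransitivity; [apply (RInt_comp_lin (fun s => / (nrm n (g2 s) - 1)) 1 (-L1) L1 (L1+L2))|].
        -- replace (1 * L1 + - L1) with 0 by ring. replace (1 * (L1 + L2) + - L1) with L2 by ring. auto.
        -- f_equal; ring.
  - apply ex_RInt_Chasles_1 with (L1 + L2); auto. lra.
  - apply ex_RInt_Chasles_2 with 0; auto. lra.
Qed.

Definition seg (u v : Rn) L s : Rn := fun i => u i + (s / L) * (v i - u i).
Definition lin (u v : Rn) t : Rn := fun i => u i + t * (v i - u i).

Lemma seg_lin u v L s : seg u v L s = lin u v (s / L).
Proof. reflexivity. Qed.

Lemma dst_lin n u v t1 t2 : dst n (lin u v t1) (lin u v t2) = Rabs (t1 - t2) * dst n v u.
Proof.
  unfold dst, lin. rewrite <- nrm_scal. f_equal. apply functional_extensionality; intros; ring.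
Qed.

Lemma seg_CS n u v L : 0 < L -> dst n u v <= L -> (forall t, 0 <= t <= 1 -> G n (lin u v t)) ->
  CS n u v (RInt (fun s => / (nrm n (seg u v L s) - 1)) 0 L).
Proof.
  intros HL Hd HG. apply CS_intro.
  - lra.
  - unfold seg. apply functional_extensionality; intros i. unfold Rdiv. ring.
  - unfold seg. apply functional_extensionality; intros i. field. lra.
  - intros s t Hs Ht. rewrite dist_dst, !seg_lin, dst_lin, dst_sym.
    replace (s / L - t / L) with ((s - t) / L) by (field; lra).
    rewrite Rabs_div, (Rabs_pos_eq L) by lra.
    pose proof (Rabs_pos (s - t)). pose proof (nrm_ge0 n (fun i => u i - v i)).
    unfold Rdiv. rewrite Rmult_assoc, (Rmult_comm (/ L)), <- Rmult_assoc.
    replace (Rabs (s - t)) with (Rabs (s - t) * L * / L) at 2 by (field; lra).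
    apply Rmult_le_compat_r. left; apply Rinv_0_lt_compat; lra.
    apply Rmult_le_compat_l; auto.
  - intros s Hs. rewrite seg_lin. apply HG. split.
    apply Rmult_le_pos; [lra| left; apply Rinv_0_lt_compat; lra].
    apply Rmult_le_reg_r with L; [lra|]. unfold Rdiv. rewrite Rmult_assoc, Rinv_l; lra.
Qed.

Lemma seg_bound n u v L rho : 0 < L -> dst n u v <= L -> 1 < rho ->
  (forall t, 0 <= t <= 1 -> rho <= nrm n (lin u v t)) ->
  exists w, CS n u v w /\ w <= L / (rho - 1).
Proof.
  intros HL Hd Hr Hn.
  assert (HG : forall t, 0 <= t <= 1 -> G n (lin u v t)).
  { intros t Ht. apply G_nrm. specialize (Hn t Ht). lra. }
  pose proof (seg_CS n u v L HL Hd HG) as C.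
  eexists; split; [exact C|].
  assert (Hs : forall s, 0 <= s <= L -> rho <= nrm n (seg u v L s)).
  { intros s Hs. rewrite seg_lin. apply Hn. split.
    apply Rmult_le_pos; [lra| left; apply Rinv_0_lt_compat; lra].
    apply Rmult_le_reg_r with L; [lra|]. unfold Rdiv. rewrite Rmult_assoc, Rinv_l; lra. }
  replace (L / (rho - 1)) with (RInt (fun _ => / (rho - 1)) 0 L).
  - apply RInt_le. lra.
    + destruct (CS_val _ _ _ _ C) as [L' [g' _]].
      apply ex_RInt_ext with (fun s => / (nrm n (seg u v L (clamp L s)) - 1)).
      * intros x Hx. rewrite Rmin_left, Rmax_right in Hx by lra. rewrite clamp_id; auto. lra.
      * apply (@ex_RInt_continuous R_CompleteNormedModule). intros z _.
        apply integrand_cont. lra.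
        -- intros s t Hs1 Ht1. rewrite dist_dst, !seg_lin, dst_lin, dst_sym.
           replace (s / L - t / L) with ((s - t) / L) by (field; lra).
           rewrite Rabs_div, (Rabs_pos_eq L) by lra.
           pose proof (Rabs_pos (s - t)). pose proof (nrm_ge0 n (fun i => u i - v i)).
           unfold Rdiv. rewrite Rmult_assoc, (Rmult_comm (/ L)), <- Rmult_assoc.
           replace (Rabs (s - t)) with (Rabs (s - t) * L * / L) at 2 by (field; lra).
           apply Rmult_le_compat_r. left; apply Rinv_0_lt_compat; lra.
           apply Rmult_le_compat_l; auto.
        -- intros s Hs1. apply G_nrm. specialize (Hs s Hs1). lra.
    + apply ex_RInt_const.
    + intros x Hx. apply Rinv_le_contravar. lra. specialize (Hs x ltac:(lra)). lra.
  - rewrite RInt_const. unfold scal; simpl; unfold mult; simpl. unfold Rdiv. ring.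
Qed.

Lemma RInt_log1 a L : 1 < a -> 0 <= L -> RInt (fun s => / (a + s - 1)) 0 L = ln ((a + L - 1) / (a - 1)).
Proof.
  intros Ha HL. rewrite ln_div by lra.
  apply (@is_RInt_unique R_CompleteNormedModule).
  replace (ln (a + L - 1) - ln (a - 1)) with (@minus R_AbelianGroup ((fun s => ln (a + s - 1)) L) ((fun s => ln (a + s - 1)) 0)).
  2:{ unfold minus, plus, opp; simpl. replace (a + 0 - 1) with (a - 1) by ring. ring. }
  apply (@is_RInt_derive R_CompleteNormedModule (fun s => ln (a + s - 1))).

  - intros x Hx. rewrite Rmin_left, Rmax_right in Hx by lra. auto_derive. lra. field. lra.
  - intros x Hx. rewrite Rmin_left, Rmax_right in Hx by lra.
    apply continuity_pt_filterlim.
    apply (continuity_pt_inv (fun s => a + s - 1)).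
    + apply continuity_pt_minus. apply continuity_pt_plus. apply continuity_pt_const. intros p q; reflexivity.
      apply derivable_continuous_pt, derivable_pt_id. apply continuity_pt_const. intros p q; reflexivity.
    + lra.
Qed.

Lemma RInt_log2 c L : 0 <= L -> 1 < c - L -> RInt (fun s => / (c - s - 1)) 0 L = ln ((c - 1) / (c - L - 1)).
Proof.
  intros HL Hc. rewrite ln_div by lra.
  apply (@is_RInt_unique R_CompleteNormedModule).
  replace (ln (c - 1) - ln (c - L - 1)) with (@minus R_AbelianGroup ((fun s => - ln (c - s - 1)) L) ((fun s => - ln (c - s - 1)) 0)).
  2:{ unfold minus, plus, opp; simpl. replace (c - 0 - 1) with (c - 1) by ring. ring. }
  apply (@is_RInt_derive R_CompleteNormedModule (fun s => - ln (c - s - 1))).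

  - intros x Hx. rewrite Rmin_left, Rmax_right in Hx by lra. auto_derive. lra. field. lra.
  - intros x Hx. rewrite Rmin_left, Rmax_right in Hx by lra.
    apply continuity_pt_filterlim.
    apply (continuity_pt_inv (fun s => c - s - 1)).
    + apply continuity_pt_minus. apply continuity_pt_minus. apply continuity_pt_const. intros p q; reflexivity.
      apply derivable_continuous_pt, derivable_pt_id. apply continuity_pt_const. intros p q; reflexivity.
    + lra.
Qed.

Definition sc (c : R) (u : Rn) : Rn := fun i => c * u i.

Lemma radial_out n u R : 1 < nrm n u -> nrm n u < R ->
  CS n u (sc (R / nrm n u) u) (ln ((R - 1) / (nrm n u - 1))).
Proof.
  intros Ha HR. set (a := nrm n u) in *.
  assert (Hs : forall t, lin u (sc (R / a) u) t = sc (1 + t * (R - a) / a) u).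
  { intros t. unfold lin, sc. apply functional_extensionality; intros i. field. lra. }
  assert (Hn : forall t, 0 <= t -> nrm n (lin u (sc (R / a) u) t) = a + t * (R - a)).
  { intros t Ht. rewrite Hs. unfold sc. rewrite nrm_scal_pos. fold a. field. lra.
    assert (0 <= t * (R - a) / a). { apply Rmult_le_pos. nra. left; apply Rinv_0_lt_compat; lra. } lra. }
  assert (Hd : dst n u (sc (R / a) u) = R - a).
  { rewrite dst_sym. unfold dst, sc.
    replace (fun i => R / a * u i - u i) with (sc (R / a - 1) u) by (unfold sc; apply functional_extensionality; intros; ring).
    unfold sc. rewrite nrm_scal_pos. fold a. field. lra.
    apply Rle_trans with ((R - a) / a). left; apply Rmult_lt_0_compat; [lra|apply Rinv_0_lt_compat; lra].
    right. field. lra. }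
  replace (ln ((R - 1) / (a - 1))) with (RInt (fun s => / (nrm n (seg u (sc (R / a) u) (R - a) s) - 1)) 0 (R - a)).
  - apply seg_CS. lra. lra. intros t Ht. apply G_nrm. rewrite Hn by lra. nra.
  - rewrite (RInt_ext _ (fun s => / (a + s - 1))).
    + rewrite RInt_log1 by lra. f_equal. f_equal. ring.
    + intros x Hx. rewrite Rmin_left, Rmax_right in Hx by lra. rewrite seg_lin, Hn.
      f_equal. f_equal. field. lra. apply Rmult_le_pos. lra. left; apply Rinv_0_lt_compat; lra.
Qed.

Lemma radial_in n u R : 1 < nrm n u -> nrm n u < R ->
  CS n (sc (R / nrm n u) u) u (ln ((R - 1) / (nrm n u - 1))).
Proof.
  intros Ha HR. set (a := nrm n u) in *.
  assert (Hs : forall t, lin (sc (R / a) u) u t = sc ((R - t * (R - a)) / a) u).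
  { intros t. unfold lin, sc. apply functional_extensionality; intros i. field. lra. }
  assert (Hn : forall t, 0 <= t <= 1 -> nrm n (lin (sc (R / a) u) u t) = R - t * (R - a)).
  { intros t Ht. rewrite Hs. unfold sc. rewrite nrm_scal_pos. fold a. field. lra.
    apply Rmult_le_pos. nra. left; apply Rinv_0_lt_compat; lra. }
  assert (Hd : dst n (sc (R / a) u) u = R - a).
  { unfold dst, sc.
    replace (fun i => R / a * u i - u i) with (sc (R / a - 1) u) by (unfold sc; apply functional_extensionality; intros; ring).
    unfold sc. rewrite nrm_scal_pos. fold a. field. lra.
    apply Rle_trans with ((R - a) / a). left; apply Rmult_lt_0_compat; [lra|apply Rinv_0_lt_compat; lra].
    right. field. lra. }
  replace (ln ((R - 1) / (a - 1))) with (RInt (fun s => / (nrm n (seg (sc (R / a) u) u (R - a) s) - 1)) 0 (R - a)).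
  - apply seg_CS. lra. lra. intros t Ht. apply G_nrm. rewrite Hn by lra. nra.
  - rewrite (RInt_ext _ (fun s => / (R - s - 1))).
    + rewrite RInt_log2 by lra. f_equal. f_equal. ring.
    + intros x Hx. rewrite Rmin_left, Rmax_right in Hx by lra. rewrite seg_lin, Hn.
      f_equal. f_equal. field. lra. split. apply Rmult_le_pos. lra. left; apply Rinv_0_lt_compat; lra.
      apply Rmult_le_reg_r with (R - a); [lra|]. unfold Rdiv. rewrite Rmult_assoc, Rinv_l; lra.
Qed.

Definition cosang n u v := ip n u v / (nrm n u * nrm n v).
Definition ang n u v := acos (cosang n u v).

Lemma cosang_bound n u v : 0 < nrm n u -> 0 < nrm n v -> -1 <= cosang n u v <= 1.
Proof.
  intros. unfold cosang. pose proof (CS_le n u v); pose proof (CS_ge n u v).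
  assert (0 < nrm n u * nrm n v) by nra.
  split.
  - apply Rmult_le_reg_r with (nrm n u * nrm n v); auto. unfold Rdiv. rewrite Rmult_assoc, Rinv_l; lra.
  - apply Rmult_le_reg_r with (nrm n u * nrm n v); auto. unfold Rdiv. rewrite Rmult_assoc, Rinv_l; lra.
Qed.

Definition unitv n u := sc (/ nrm n u) u.

Lemma nrm_unitv n u : 0 < nrm n u -> nrm n (unitv n u) = 1.
Proof. intros. unfold unitv, sc. rewrite nrm_scal_pos. field. lra. left; apply Rinv_0_lt_compat; lra. Qed.

Lemma cosang_unit n u v : 0 < nrm n u -> 0 < nrm n v -> cosang n u v = ip n (unitv n u) (unitv n v).
Proof.
  intros. unfold cosang, unitv, sc. rewrite ip_scal_l, ip_scal_r. field. lra.
Qed.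

Lemma acos_le_of_cos x y : -1 <= x <= 1 -> 0 <= y <= PI -> cos y <= x -> acos x <= y.
Proof.
  intros Hx Hy Hc. destruct (Rle_dec (acos x) y) as [h|h]; auto. exfalso.
  pose proof (acos_bound x).
  assert (cos (acos x) < cos y) by (apply cos_decreasing_1; lra).
  rewrite cos_acos in H0 by lra. lra.
Qed.

Lemma ang_tri n u v w : 0 < nrm n u -> 0 < nrm n v -> 0 < nrm n w ->
  ang n u w <= ang n u v + ang n v w.
Proof.
  intros Hu Hv Hw. unfold ang.
  pose proof (cosang_bound n u v Hu Hv) as B1. pose proof (cosang_bound n v w Hv Hw) as B2.
  pose proof (cosang_bound n u w Hu Hw) as B3.
  pose proof (acos_bound (cosang n u v)). pose proof (acos_bound (cosang n v w)).
  destruct (Rle_dec PI (acos (cosang n u v) + acos (cosang n v w))) as [h|h].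
  { pose proof (acos_bound (cosang n u w)). lra. }
  apply acos_le_of_cos; auto. lra.
  rewrite cos_plus, !cos_acos, !sin_acos by lra.
  rewrite !cosang_unit by auto.
  set (a := unitv n u). set (b := unitv n v). set (c := unitv n w).
  assert (Na : ip n a a = 1). { rewrite <- nrm_sq. unfold a. rewrite nrm_unitv; auto. ring. }
  assert (Nb : ip n b b = 1). { rewrite <- nrm_sq. unfold b. rewrite nrm_unitv; auto. ring. }
  assert (Nc : ip n c c = 1). { rewrite <- nrm_sq. unfold c. rewrite nrm_unitv; auto. ring. }
  set (c1 := ip n a b). set (c2 := ip n b c).
  set (p := fun i => a i - c1 * b i). set (q := fun i => c i - c2 * b i).
  assert (Hpq : ip n p q = ip n a c - c1 * c2).
  { unfold p, q. rewrite ip_sub_l, !ip_sub_r; repeat rewrite ?ip_scal_l, ?ip_scal_r.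
    rewrite Nb; try rewrite (ip_sym n c b); try rewrite (ip_sym n b a); fold c1 c2; ring. }
  assert (Hpp : nrm n p = sqrt (1 - c1²)).
  { unfold nrm. f_equal. unfold p. rewrite ip_sub_l, !ip_sub_r; repeat rewrite ?ip_scal_l, ?ip_scal_r.
    rewrite Na, Nb; try rewrite (ip_sym n c b); try rewrite (ip_sym n b a); fold c1 c2; unfold Rsqr; ring. }
  assert (Hqq : nrm n q = sqrt (1 - c2²)).
  { unfold nrm. f_equal. unfold q. rewrite ip_sub_l, !ip_sub_r; repeat rewrite ?ip_scal_l, ?ip_scal_r.
    rewrite Nc, Nb; try rewrite (ip_sym n c b); try rewrite (ip_sym n b a); fold c1 c2; unfold Rsqr; ring. }
  pose proof (CS_ge n p q). rewrite Hpq, Hpp, Hqq in H1. lra.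
Qed.

Lemma cos_ub4 y : 0 <= y <= 1 -> cos y <= 1 - y^2/2 + y^4/24.
Proof.
  intros Hy. pose proof (cos_bound y 0) as [_ H].
  - pose proof PI2_1. lra.
  - pose proof PI2_1. lra.
  - unfold cos_approx, cos_term in H. simpl in H. unfold Rdiv in H.
    replace (1 - y ^ 2 / 2 + y ^ 4 / 24) with
      (1 * (1 * / 1) + -1 * 1 * (y * (y * 1) * / (2 * 1)) + -1 * (-1 * 1) * (y * (y * (y * (y * 1))) * / (4 * (3 * (2 * 1))))).
    lra. field.
Qed.

Lemma ang_local n u v m h : 1 < m -> m <= nrm n u -> m <= nrm n v -> dst n u v <= h -> 0 < h <= 1/2 ->
  ang n u v <= h / (m + h - 1).
Proof.
  intros Hm Hu Hv Hd Hh. unfold ang.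
  pose proof (cosang_bound n u v ltac:(lra) ltac:(lra)) as B.
  set (a := nrm n u) in *. set (b := nrm n v) in *.
  set (q := h / m). set (y := q * (1 + q)).
  assert (Hq : 0 < q <= 1/2).
  { unfold q. split. apply Rmult_lt_0_compat; [lra|apply Rinv_0_lt_compat; lra].
    apply Rmult_le_reg_r with m; [lra|]. unfold Rdiv. rewrite Rmult_assoc, Rinv_l; nra. }
  assert (Hy1 : y <= h / (m + h - 1)).
  { unfold y, q. replace (h / m * (1 + h / m)) with (h*(m+h)/(m*m)) by (field; lra).
    assert (E : h / (m + h - 1) - h*(m+h)/(m*m) = h * (m*m - (m+h)*(m+h-1)) / (m*m*(m+h-1))) by (field; lra).
    assert (0 <= h * (m*m - (m+h)*(m+h-1)) / (m*m*(m+h-1))).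
    { assert (0 <= (m-1)*(1-2*h)) by (apply Rmult_le_pos; lra).
      assert (0 <= m*m - (m+h)*(m+h-1)) by nra.
      unfold Rdiv; apply Rmult_le_pos; [nra | left; apply Rinv_0_lt_compat; apply Rmult_lt_0_compat; [nra|lra]]. }
    lra. }
  assert (Hc : 1 - q^2/2 <= cosang n u v).
  { pose proof (dst_sq n u v). fold a b in H. pose proof (nrm_ge0 n (fun i => u i - v i)).
    unfold dst in Hd. assert (dst n u v ^ 2 <= h^2) by (unfold dst; nra).
    unfold cosang. fold a b.
    assert (0 < a * b) by nra.
    apply Rmult_le_reg_r with (a * b); auto. unfold Rdiv. rewrite Rmult_assoc, Rinv_l by lra.
    unfold q. assert (m * m <= a * b) by nra.
    assert (h^2 / m^2 * (a*b) >= h^2) .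
    { unfold Rdiv. apply Rle_ge. apply Rmult_le_reg_r with (m^2). nra.
      replace (h ^ 2 * / m ^ 2 * (a * b) * m ^ 2) with (h^2 * (a*b)) by (field; lra). nra. }
    replace ((h / m) ^ 2) with (h^2/m^2) by (field; lra).
    assert (0 <= (a - b)^2) by apply pow2_ge_0.
    assert (2 * ip n u v >= 2 * (a*b) - h^2) by nra.
    replace ((1 - h ^ 2 / m ^ 2 / 2) * (a * b)) with (a*b - (h^2/m^2*(a*b))/2) by (field; lra).
    lra. }
  assert (Hcos : cos y <= 1 - q^2/2).
  { assert (0 <= y <= 1) by (unfold y; nra). pose proof (cos_ub4 y H).
    assert (y^2/2 - y^4/24 >= q^2/2).
    { unfold y. assert (0 < q^2) by nra. assert (q^2 <= 1/4) by nra.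
      replace ((q * (1 + q)) ^ 2 / 2 - (q * (1 + q)) ^ 4 / 24) with
        (q^2 * ((1+q)^2/2 - q^2 * (1+q)^4 / 24)) by field.
      assert ((1+q)^2/2 - q^2 * (1+q)^4/24 >= 1/2).
      { assert ((1+q)^4 <= 81/16) by (assert ((1+q)^2 <= 9/4) by nra; nra). nra. }
      nra. }
    lra. }
  apply Rle_trans with y; auto. apply acos_le_of_cos; auto.
  split. unfold y; nra. pose proof PI2_3_2. unfold y; nra. lra.
Qed.

Lemma ang_self n x : 0 < nrm n x -> ang n x x = 0.
Proof.
  intros H. unfold ang, cosang. rewrite <- nrm_sq.
  replace (nrm n x ^ 2 / (nrm n x * nrm n x)) with 1 by (field; lra). apply acos_1.
Qed.

Lemma RInt_sub_ex (f : R -> R) L s t : 0 <= s -> s <= t -> t <= L -> ex_RInt f 0 L -> ex_RInt f s t.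
Proof.
  intros H1 H2 H3 H. apply (ex_RInt_Chasles_2 f 0). lra. apply (ex_RInt_Chasles_1 f 0 t L). lra. auto.
Qed.

Lemma CS_ge_ang n x y v : CS n x y v -> ang n x y <= v.
Proof.
  intros C. pose proof (CS_ge0 _ _ _ _ C) as Hv0.
  destruct (CS_val _ _ _ _ C) as [L [gam [HL [H0 [H1 [Hlip [HG ->]]]]]]].
  set (f := fun s => / (nrm n (gam s) - 1)) in *.
  assert (Hex : ex_RInt f 0 L) by (apply integrand_ex; auto).
  assert (Hpos : forall s, 0 <= s <= L -> 1 < nrm n (gam s)).
  { intros s Hs. apply G_nrm. auto. }
  destruct (Req_dec L 0) as [HL0|HL0].
  { subst L. rewrite <- H1, H0. rewrite ang_self. auto. rewrite <- H0. pose proof (Hpos 0 ltac:(lra)). lra. }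
  destruct (INR_unbounded (2 * L)) as [N HN].
  assert (HN0 : (0 < N)%nat). { destruct N. simpl in HN. lra. lia. }
  assert (HNr : 0 < INR N) by (apply lt_0_INR; auto).
  set (h := L / INR N).
  assert (Hh : 0 < h <= 1/2).
  { unfold h. split. apply Rmult_lt_0_compat; [lra| apply Rinv_0_lt_compat; lra].
    apply Rmult_le_reg_r with (INR N); auto. unfold Rdiv. rewrite Rmult_assoc, Rinv_l; lra. }
  assert (HNh : INR N * h = L) by (unfold h; field; lra).
  assert (Claim : forall k, (k <= N)%nat -> ang n x (gam (INR k * h)) <= RInt f 0 (INR k * h)).
  { induction k as [|k IH]; intros Hk.
    - simpl. rewrite Rmult_0_l, H0, RInt_point. rewrite ang_self. right; reflexivity.
      rewrite <- H0. pose proof (Hpos 0 ltac:(lra)). lra.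
    - rewrite S_INR.
      assert (Hk1 : INR (S k) <= INR N) by (apply le_INR; auto). rewrite S_INR in Hk1.
      set (s := INR k * h). set (t := (INR k + 1) * h).
      assert (Hs0 : 0 <= s) by (unfold s; apply Rmult_le_pos; [apply pos_INR|lra]).
      assert (Hst : t = s + h) by (unfold s, t; ring).
      assert (HtL : t <= L) by (rewrite <- HNh; unfold t; apply Rmult_le_compat_r; lra).
      specialize (IH ltac:(lia)). fold s in IH.
      pose proof (Hpos s ltac:(lra)) as Ps. pose proof (Hpos t ltac:(lra)) as Pt.
      rewrite <- (RInt_Chasles f 0 s t).
      2: apply (RInt_sub_ex f L); auto; lra.
      2: apply (RInt_sub_ex f L); auto; lra.
      change plus with Rplus.
      eapply Rle_trans. apply (ang_tri n x (gam s) (gam t)).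
      rewrite <- H0. pose proof (Hpos 0 ltac:(lra)). lra. lra. lra.
      apply Rplus_le_compat; auto.
      set (m := Rmin (nrm n (gam s)) (nrm n (gam t))).
      assert (Hm : 1 < m /\ m <= nrm n (gam s) /\ m <= nrm n (gam t)).
      { unfold m. split. apply Rmin_glb_lt; lra. split. apply Rmin_l. apply Rmin_r. }
      eapply Rle_trans. apply (ang_local n _ _ m h); try tauto.
      rewrite <- dist_dst. eapply Rle_trans. apply Hlip; lra. rewrite Rabs_left1; lra.
      replace (h / (m + h - 1)) with (RInt (fun _ => / (m + h - 1)) s t).
      + apply RInt_le. lra. apply ex_RInt_const. apply (RInt_sub_ex f L); auto; lra.
        intros u Hu. unfold f. apply Rinv_le_contravar. pose proof (Hpos u ltac:(lra)). lra.
        assert (nrm n (gam u) <= m + h).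
        { unfold m, Rmin. destruct Rle_dec.
          - pose proof (nrm_rev n (gam u) (gam s)). rewrite <- dist_dst in H.
            pose proof (Hlip u s ltac:(lra) ltac:(lra)). rewrite Rabs_right in H2 by lra.
            pose proof (Rle_abs (nrm n (gam u) - nrm n (gam s))). lra.
          - pose proof (nrm_rev n (gam u) (gam t)). rewrite <- dist_dst in H.
            pose proof (Hlip u t ltac:(lra) ltac:(lra)). rewrite Rabs_left1 in H2 by lra.
            pose proof (Rle_abs (nrm n (gam u) - nrm n (gam t))). lra. }
        lra.
      + rewrite RInt_const. unfold scal; simpl; unfold mult; simpl. rewrite Hst. unfold Rdiv. ring. }
  pose proof (Claim N (Nat.le_refl N)). rewrite HNh, H1 in H. exact H.
Qed.

Definition e0 : Rn := fun i => if Nat.eq_dec i 0 then 1 else 0.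

Lemma ip_e0 n : (1 <= n)%nat -> ip n e0 e0 = 1.
Proof.
  intros Hn. induction n as [|k IH]; [lia|].
  simpl. destruct k.
  - simpl. unfold e0. simpl. ring.
  - rewrite IH by lia. unfold e0. destruct Nat.eq_dec; [lia|]. ring.
Qed.

Lemma nrm_sc_e0 n r : (1 <= n)%nat -> nrm n (sc r e0) = Rabs r.
Proof. intros. unfold sc. rewrite nrm_scal. unfold nrm. rewrite ip_e0, sqrt_1 by auto. ring. Qed.

Lemma ang_antipodal n r : (1 <= n)%nat -> 0 < r -> ang n (sc r e0) (sc (-r) e0) = PI.
Proof.
  intros Hn Hr. unfold ang, cosang. rewrite !nrm_sc_e0 by auto. unfold sc. rewrite ip_scal_l, ip_scal_r, ip_e0 by auto.
  rewrite Rabs_Ropp, Rabs_pos_eq by lra.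
  replace (r * (- r * 1) / (r * r)) with (Ropp 1) by (field; lra). rewrite acos_opp, acos_1. ring.
Qed.

Lemma lin0 u v : lin u v 0 = u.
Proof. unfold lin. apply functional_extensionality; intros; ring. Qed.
Lemma lin1 u v : lin u v 1 = v.
Proof. unfold lin. apply functional_extensionality; intros; ring. Qed.

Lemma seg_norm_lb n x y t : 0 <= t <= 1 ->
  Rmin (nrm n x) (nrm n y) - dst n x y / 2 <= nrm n (lin x y t).
Proof.
  intros Ht.
  pose proof (dst_lin n x y t 0) as D0. rewrite lin0 in D0.
  pose proof (dst_lin n x y t 1) as D1. rewrite lin1 in D1.
  pose proof (nrm_rev n (lin x y t) x). pose proof (nrm_rev n (lin x y t) y).
  pose proof (Rabs_maj2 (nrm n (lin x y t) - nrm n x)). pose proof (Rabs_maj2 (nrm n (lin x y t) - nrm n y)).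
  pose proof (Rmin_l (nrm n x) (nrm n y)). pose proof (Rmin_r (nrm n x) (nrm n y)).
  rewrite (dst_sym n y x) in D0, D1. pose proof (nrm_ge0 n (fun i => x i - y i)). fold (dst n x y) in *.
  replace (t - 0) with t in D0 by ring. rewrite Rabs_pos_eq in D0 by lra.
  rewrite Rabs_left1 in D1 by lra.
  destruct (Rle_dec t (1/2)).
  - assert (t * dst n x y <= 1/2 * dst n x y) by (apply Rmult_le_compat_r; lra). lra.
  - assert (- (t - 1) * dst n x y <= 1/2 * dst n x y) by (apply Rmult_le_compat_r; lra). lra.
Qed.

Lemma ip_lin_r n a b x y z :
  ip n z (fun i => a * x i + b * y i) = a * ip n z x + b * ip n z y.
Proof. induction n; simpl; [ring| rewrite IHn; ring]. Qed.

Lemma ip_lin_self n p q R t :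
  ip n (lin (sc R p) (sc R q) t) (lin (sc R p) (sc R q) t) =
  R^2 * ((1-t)^2 * ip n p p + t^2 * ip n q q + 2 * t * (1 - t) * ip n p q).
Proof.
  replace (lin (sc R p) (sc R q) t) with (fun i => (R * (1 - t)) * p i + (R * t) * q i).
  2:{ unfold lin, sc. apply functional_extensionality; intros; ring. }
  rewrite ip_lin, !ip_lin_r. rewrite (ip_sym n q p). ring.
Qed.

Lemma dst_sc_sq n p q R : dst n (sc R p) (sc R q) ^ 2 = R^2 * (ip n p p + ip n q q - 2 * ip n p q).
Proof.
  unfold dst. rewrite nrm_sq.
  replace (fun i => sc R p i - sc R q i) with (fun i => R * p i + (- R) * q i).
  2:{ unfold sc. apply functional_extensionality; intros; ring. }
  rewrite ip_lin, !ip_lin_r. rewrite (ip_sym n q p). ring.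
Qed.

Lemma unit_ip n p : nrm n p = 1 -> ip n p p = 1.
Proof. intros H. rewrite <- nrm_sq, H. ring. Qed.

Lemma chord_wide n p q R : nrm n p = 1 -> nrm n q = 1 -> 0 <= ip n p q -> 2 <= R ->
  exists w, CS n (sc R p) (sc R q) w /\ w <= 14143 / 10000 * R / (7071 / 10000 * R - 1).
Proof.
  intros Hp Hq Hc HR. apply unit_ip in Hp. apply unit_ip in Hq.
  pose proof (CS_le n p q) as Cp. unfold nrm in Cp. rewrite Hp, Hq, sqrt_1 in Cp.
  apply seg_bound.
  - lra.
  - apply nrm_le_iff. lra. fold (dst n (sc R p) (sc R q)).
    rewrite <- nrm_sq. fold (dst n (sc R p) (sc R q)). rewrite dst_sc_sq, Hp, Hq.
    replace ((14143 / 10000 * R) ^ 2) with (R^2 * (14143 / 10000)^2) by ring.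
    apply Rmult_le_compat_l. apply pow2_ge_0. lra.
  - lra.
  - intros t Ht. apply nrm_ge_iff. lra. rewrite ip_lin_self, Hp, Hq.
    replace ((7071 / 10000 * R) ^ 2) with (R^2 * (7071 / 10000)^2) by ring.
    apply Rmult_le_compat_l. apply pow2_ge_0.
    assert (0 <= t * (1 - t)) by (apply Rmult_le_pos; lra).
    assert (2 * t * (1 - t) <= 1/2) by (assert (0 <= (2*t-1)^2) by apply pow2_ge_0; lra).
    assert (2 * t * (1 - t) * (1 - ip n p q) <= 1/2).
    { apply Rle_trans with (2 * t * (1 - t) * 1). apply Rmult_le_compat_l; lra. lra. }
    replace ((1 - t) ^ 2 * 1 + t ^ 2 * 1 + 2 * t * (1 - t) * ip n p q) with (1 - 2 * t * (1 - t) * (1 - ip n p q)) by ring.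
    lra.
Qed.

Lemma chord_narrow n p q R L z : nrm n p = 1 -> nrm n q = 1 -> 0 < L ->
  1 - ip n p q <= z -> 0 <= z <= 1/2 -> R^2 * (2 * z) <= L^2 -> 1 < R * (1 - z/2) ->
  exists w, CS n (sc R p) (sc R q) w /\ w <= L / (R * (1 - z/2) - 1).
Proof.
  intros Hp Hq HL Hz Hz1 HLz HR. apply unit_ip in Hp. apply unit_ip in Hq.
  pose proof (CS_le n p q) as Cp. unfold nrm in Cp. rewrite Hp, Hq, sqrt_1 in Cp.
  assert (HR0 : 0 < R) by (destruct (Rle_dec R 0); [assert (R * (1 - z/2) <= 0) by (apply Rmult_le_0_r; lra); lra | lra]).
  apply seg_bound; auto.
  - apply nrm_le_iff. lra. fold (dst n (sc R p) (sc R q)).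
    rewrite <- nrm_sq. fold (dst n (sc R p) (sc R q)). rewrite dst_sc_sq, Hp, Hq.
    apply Rle_trans with (R^2 * (2 * z)); auto. apply Rmult_le_compat_l. apply pow2_ge_0. lra.
  - intros t Ht. apply nrm_ge_iff. lra. rewrite ip_lin_self, Hp, Hq.
    assert (0 <= t * (1 - t)) by (apply Rmult_le_pos; lra).
    assert (2 * t * (1 - t) <= 1/2) by (assert (0 <= (2*t-1)^2) by apply pow2_ge_0; lra).
    assert (0 <= 1 - ip n p q) by lra.
    assert (2 * t * (1 - t) * (1 - ip n p q) <= z/2).
    { apply Rle_trans with (1/2 * (1 - ip n p q)). apply Rmult_le_compat_r; lra. lra. }
    assert ((1 - z/2)^2 <= 1 - z/2) by (assert (0 <= z/2 * (1 - z/2)) by (apply Rmult_le_pos; lra); lra).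
    replace ((1 - t) ^ 2 * 1 + t ^ 2 * 1 + 2 * t * (1 - t) * ip n p q) with (1 - 2 * t * (1 - t) * (1 - ip n p q)) by ring.
    replace ((R * (1 - z / 2)) ^ 2) with (R^2 * (1 - z/2)^2) by ring.
    apply Rmult_le_compat_l. apply pow2_ge_0. lra.
Qed.

Lemma sc_unit n x R : 0 < nrm n x -> sc (R / nrm n x) x = sc R (unitv n x).
Proof. intros. unfold unitv, sc. apply functional_extensionality; intros. field. lra. Qed.

Lemma PI_lb : 314 / 100 <= PI.
Proof.
  pose proof (PI_2_3_7_ineq 1) as [H _].
  unfold PI_2_3_7_tg, Ratan_seq, tg_alt in H. simpl in H. lra.
Qed.

Lemma exp_mult_nat k y : exp (INR k * y) = exp y ^ k.
Proof.
  induction k. simpl. rewrite Rmult_0_l, exp_0. reflexivity.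
  rewrite S_INR. replace ((INR k + 1) * y) with (INR k * y + y) by ring.
  rewrite exp_plus, IHk. simpl. ring.
Qed.

Lemma exp_lb_pow k x : (0 < k)%nat -> 0 <= x -> (1 + x / INR k) ^ k <= exp x.
Proof.
  intros Hk Hx. assert (0 < INR k) by (apply lt_0_INR; auto).
  replace x with (INR k * (x / INR k)) at 2 by (field; lra).
  rewrite exp_mult_nat. apply pow_incr. split.
  assert (0 <= x / INR k) by (apply Rmult_le_pos; [lra| left; apply Rinv_0_lt_compat; lra]). lra.
  apply exp_ineq1_le.
Qed.

Lemma exp_ub_pow k x : (0 < k)%nat -> 0 <= x < INR k -> exp x * (1 - x / INR k) ^ k <= 1.
Proof.
  intros Hk Hx. assert (0 < INR k) by (apply lt_0_INR; auto).
  replace x with (INR k * (x / INR k)) at 1 by (field; lra).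
  rewrite exp_mult_nat. rewrite <- Rpow_mult_distr.
  apply Rle_trans with (1 ^ k); [|rewrite pow1; lra].
  apply pow_incr. split.
  - apply Rmult_le_pos. left; apply exp_pos.
    assert (x / INR k < 1). { apply Rmult_lt_reg_r with (INR k); auto. unfold Rdiv. rewrite Rmult_assoc, Rinv_l; lra. }
    lra.
  - pose proof (exp_ineq1_le (- (x / INR k))).
    pose proof (exp_pos (x / INR k)).
    replace (exp (x / INR k) * (1 - x / INR k)) with (exp (x / INR k) * (1 + - (x / INR k))) by ring.
    apply Rle_trans with (exp (x / INR k) * exp (- (x / INR k))).
    apply Rmult_le_compat_l; lra. rewrite <- exp_plus. replace (x / INR k + - (x / INR k)) with 0 by ring.
    rewrite exp_0. lra.
Qed.

Lemma ln_le_of a c : 0 < a -> a <= exp c -> ln a <= c.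
Proof. intros. rewrite <- (ln_exp c). apply ln_le; auto. Qed.
Lemma ln_ge_of a c : exp c <= a -> c <= ln a.
Proof. intros. rewrite <- (ln_exp c). apply ln_le; auto. apply exp_pos. Qed.


Lemma pow64 x : x ^ 64 = (((((x^2)^2)^2)^2)^2)^2.
Proof. ring. Qed.
Lemma sq_mono l a : 0 <= l -> l <= a -> l^2 <= a^2.
Proof. intros. nra. Qed.
Lemma chain6 x l1 l2 l3 l4 l5 l6 : 0 <= x -> l1 <= x^2 -> 0 <= l1 -> l2 <= l1^2 -> 0 <= l2 -> l3 <= l2^2 -> 0 <= l3 ->
  l4 <= l3^2 -> 0 <= l4 -> l5 <= l4^2 -> 0 <= l5 -> l6 <= l5^2 ->
  l6 <= (((((x^2)^2)^2)^2)^2)^2.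
Proof.
  intros. apply Rle_trans with (l5^2); auto. apply sq_mono; auto.
  apply Rle_trans with (l4^2); auto. apply sq_mono; auto.
  apply Rle_trans with (l3^2); auto. apply sq_mono; auto.
  apply Rle_trans with (l2^2); auto. apply sq_mono; auto.
  apply Rle_trans with (l1^2); auto. apply sq_mono; auto.
Qed.
Lemma p_ln2_ub : (100305663 / 50000000) <= (647 / 640) ^ 64.
Proof.
  rewrite pow64.
  apply (chain6 (647 / 640) (51099731 / 50000000) (1044473 / 1000000) (3409137 / 3125000) (59505741 / 50000000) (8852333 / 6250000) (100305663 / 50000000)).
  all: lra.
Qed.
Lemma p_ln3_ub : (60112399 / 20000000) <= (6511 / 6400) ^ 64.
Proof.
  rewrite pow64.
  apply (chain6 (6511 / 6400) (10349883 / 10000000) (53560039 / 50000000) (114747111 / 100000000) (65834497 / 50000000) (173367239 / 100000000) (60112399 / 20000000)).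
  all: lra.
Qed.
Lemma p_ln2_lb : (50477699 / 100000000) <= (1583 / 1600) ^ 64.
Proof.
  rewrite pow64.
  apply (chain6 (1583 / 1600) (97886289 / 100000000) (19163451 / 20000000) (91809463 / 100000000) (42144887 / 50000000) (3552383 / 5000000) (50477699 / 100000000)).
  all: lra.
Qed.
Lemma p_ln73_lb : (2710551 / 6250000) <= (6317 / 6400) ^ 64.
Proof.
  rewrite pow64.
  apply (chain6 (6317 / 6400) (24355767 / 25000000) (94912541 / 100000000) (1407561 / 1562500) (81151097 / 100000000) (13171001 / 20000000) (2710551 / 6250000)).
  all: lra.
Qed.

Lemma INR64 : INR 64 = 64.
Proof. simpl. lra. Qed.

Lemma ln2_ub : ln 2 <= 7/10.
Proof.
  apply ln_le_of. lra. eapply Rle_trans; [|apply (exp_lb_pow 64); [lia|lra]].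
  rewrite INR64. replace (1 + 7 / 10 / 64) with (647/640) by field.
  eapply Rle_trans; [|apply p_ln2_ub]. lra.
Qed.

Lemma ln3_ub : ln 3 <= 111/100.
Proof.
  apply ln_le_of. lra. eapply Rle_trans; [|apply (exp_lb_pow 64); [lia|lra]].
  rewrite INR64. replace (1 + 111 / 100 / 64) with (6511/6400) by field.
  eapply Rle_trans; [|apply p_ln3_ub]. lra.
Qed.

Lemma ln_lb_gen a c l : 0 <= c < 64 -> l <= (1 - c / 64) ^ 64 -> 0 < l -> 1 <= a * l -> c <= ln a.
Proof.
  intros Hc Hl Hl0 Ha. apply ln_ge_of.
  pose proof (exp_ub_pow 64 c ltac:(lia)) as H. rewrite INR64 in H. specialize (H Hc).
  pose proof (exp_pos c).
  set (P := (1 - c / 64) ^ 64) in *. clearbody P.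
  assert (exp c * l <= 1). { apply Rle_trans with (exp c * P); auto. apply Rmult_le_compat_l; lra. }
  assert (exp c * l <= a * l) by lra.
  apply Rmult_le_reg_r with l; auto.
Qed.

Lemma ln2_lb : 68/100 <= ln 2.
Proof.
  eapply ln_lb_gen. lra. replace (1 - 68 / 100 / 64) with (1583/1600) by field.
  apply p_ln2_lb. lra. lra.
Qed.

Lemma ln73_lb : 83/100 <= ln (7/3).
Proof.
  eapply ln_lb_gen. lra. replace (1 - 83 / 100 / 64) with (6317/6400) by field.
  apply p_ln73_lb. lra. lra.
Qed.

Lemma ln3_lb : 1 <= ln 3.
Proof. apply ln_ge_of. apply exp_le_3. Qed.

Lemma ln_lb1 y : 0 < y -> 1 - / y <= ln y.
Proof.
  intros Hy. pose proof (exp_ineq1_le (- ln y)). rewrite exp_Ropp, exp_ln in H by auto. lra.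
Qed.

Lemma ln_le_x t : 0 <= t -> ln (1 + t) <= t.
Proof. intros. apply ln_le_of. lra. apply exp_ineq1_le. Qed.

Lemma ln_mono a b : 0 < a -> a <= b -> ln a <= ln b.
Proof. intros. apply ln_le; auto. Qed.

Lemma ip_supp01 n z p : (2 <= n)%nat -> (forall i, (2 <= i)%nat -> z i = 0) -> ip n z p = z 0%nat * p 0%nat + z 1%nat * p 1%nat.
Proof.
  intros Hn Hz. induction n as [|k IH]; [lia|].
  destruct (Nat.eq_dec k 1) as [->|Hk].
  - simpl. ring.
  - simpl. rewrite IH by lia. rewrite (Hz k) by lia. ring.
Qed.

Lemma ip_e0_l n p : (1 <= n)%nat -> ip n e0 p = p 0%nat.
Proof.
  intros Hn. induction n as [|k IH]; [lia|].
  simpl. destruct k.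
  - simpl. unfold e0. simpl. ring.
  - rewrite IH by lia. unfold e0. destruct Nat.eq_dec; [lia|]. ring.
Qed.

Lemma exists_perp n p : (2 <= n)%nat -> exists w, nrm n w = 1 /\ ip n p w = 0.
Proof.
  intros Hn.
  set (z := fun i => if Nat.eq_dec i 0 then - p 1%nat else if Nat.eq_dec i 1 then p 0%nat else 0).
  assert (Hz : forall i, (2 <= i)%nat -> z i = 0).
  { intros i Hi. unfold z. destruct Nat.eq_dec; [lia|]. destruct Nat.eq_dec; [lia|]. auto. }
  assert (Hzp : ip n z p = 0). { rewrite ip_supp01 by auto. unfold z. simpl. ring. }
  assert (Hzz : ip n z z = p 0%nat ^ 2 + p 1%nat ^ 2). { rewrite ip_supp01 by auto. unfold z. simpl. ring. }
  destruct (Req_dec (ip n z z) 0) as [H0|H0].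
  - exists e0. split.
    + unfold nrm. rewrite ip_e0 by lia. apply sqrt_1.
    + rewrite ip_sym, ip_e0_l by lia. assert (p 0%nat ^ 2 = 0).
      { pose proof (pow2_ge_0 (p 0%nat)). pose proof (pow2_ge_0 (p 1%nat)). lra. }
      nra.
  - assert (0 < nrm n z).
    { unfold nrm. apply sqrt_lt_R0. pose proof (ip_self_ge0 n z). lra. }
    exists (unitv n z). split. apply nrm_unitv; auto.
    unfold unitv, sc. rewrite ip_scal_r, ip_sym, Hzp. ring.
Qed.

Lemma exists_w n p q : (2 <= n)%nat -> nrm n p = 1 -> nrm n q = 1 ->
  exists w, nrm n w = 1 /\ 0 <= ip n p w /\ 0 <= ip n w q.
Proof.
  intros Hn Hp Hq.
  set (s := fun i => p i + q i).
  pose proof (CS_ge n p q) as Cpq. rewrite Hp, Hq in Cpq.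
  assert (Hpp : ip n p p = 1) by (apply unit_ip; auto).
  assert (Hqq : ip n q q = 1) by (apply unit_ip; auto).
  destruct (Req_dec (nrm n s) 0) as [H0|H0].
  - destruct (exists_perp n p Hn) as [w [Hw1 Hw2]]. exists w. split; auto. split. lra.
    assert (Hsw : ip n s w = 0).
    { assert (Hc : Rabs (ip n s w) <= nrm n s * nrm n w) by apply CSineq. rewrite H0 in Hc. assert (Rabs (ip n s w) = 0).
      { pose proof (Rabs_pos (ip n s w)). lra. } apply Rabs_eq_0; auto. }
    unfold s in Hsw. rewrite ip_add_l, Hw2 in Hsw. rewrite ip_sym. lra.
  - assert (Hs : 0 < nrm n s) by (pose proof (nrm_ge0 n s); lra).
    exists (unitv n s). split. apply nrm_unitv; auto.
    unfold unitv, sc. rewrite ip_scal_r, ip_scal_l.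
    assert (0 < / nrm n s) by (apply Rinv_0_lt_compat; auto).
    unfold s in *. rewrite ip_add_r, ip_add_l.
    split; apply Rmult_le_pos; lra.
Qed.

Lemma three_piece n x y R w : 1 < nrm n x < R -> 1 < nrm n y < R ->
  CS n (sc R (unitv n x)) (sc R (unitv n y)) w ->
  CS n x y (ln ((R - 1) / (nrm n x - 1)) + w + ln ((R - 1) / (nrm n y - 1))).
Proof.
  intros Hx Hy C.
  apply CS_concat with (sc R (unitv n y)).
  - apply CS_concat with (sc R (unitv n x)); auto.
    rewrite <- sc_unit by lra. apply radial_out; lra.
  - rewrite <- sc_unit by lra. apply radial_in; lra.
Qed.

Lemma cos_rel n x y : 0 < nrm n x -> 0 < nrm n y ->
  2 * (nrm n x * nrm n y) * (1 - ip n (unitv n x) (unitv n y)) <= dst n x y ^ 2.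
Proof.
  intros Hx Hy. rewrite <- cosang_unit by auto. unfold cosang.
  rewrite dst_sq. assert (0 <= (nrm n x - nrm n y)^2) by apply pow2_ge_0.
  replace (2 * (nrm n x * nrm n y) * (1 - ip n x y / (nrm n x * nrm n y))) with
    (2 * (nrm n x * nrm n y) - 2 * ip n x y) by (field; lra).
  lra.
Qed.

Definition Kup := 113 / 10.

Lemma T_bound R u0 B : u0 <= R -> 2 <= u0 -> B <= (7071/10000 * B - 28286/10000) * u0 ->
  0 < 7071/10000 * B - 28286/10000 -> 2 * (14143 / 10000 * R / (7071 / 10000 * R - 1)) <= B.
Proof.
  intros H1 H2 H3 H4.
  assert (Hd : 0 < 7071 / 10000 * R - 1) by lra.
  assert (HB : B <= (7071/10000 * B - 28286/10000) * R).
  { apply Rle_trans with ((7071/10000 * B - 28286/10000) * u0); auto. apply Rmult_le_compat_l; lra. }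
  apply Rmult_le_reg_r with (7071 / 10000 * R - 1); auto.
  replace (2 * (14143 / 10000 * R / (7071 / 10000 * R - 1)) * (7071 / 10000 * R - 1))
    with (28286 / 10000 * R) by (field; intro; clear HB H3; lra). lra.
Qed.

Lemma ln4 : ln 4 = 2 * ln 2.
Proof. replace 4 with (2 * 2) by ring. rewrite ln_mult by lra. ring. Qed.
Lemma ln6 : ln 6 = ln 2 + ln 3.
Proof. replace 6 with (2 * 3) by ring. rewrite ln_mult by lra. ring. Qed.

Lemma B2_num m R J : 0 < m -> 2 * (1 + m) <= R -> ln (2 + / m) <= J ->
  2 * ln 2 + 2 * (14143 / 10000 * R / (7071 / 10000 * R - 1)) <= 93 / 10 * J.
Proof.
  intros Hm HR HJ. pose proof ln2_ub as L1. pose proof ln2_lb as L2. pose proof ln3_lb as L3. pose proof ln73_lb as L4.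
  assert (Hi : 0 < / m) by (apply Rinv_0_lt_compat; auto).
  destruct (Rle_dec 3 m).
  { assert (T : 2 * (14143 / 10000 * R / (7071 / 10000 * R - 1)) <= 487/100) by (apply (T_bound R 8); lra).
    assert (E : ln 2 <= ln (2 + / m)) by (apply ln_mono; lra). lra. }
  destruct (Rle_dec 1 m).
  { assert (T : 2 * (14143 / 10000 * R / (7071 / 10000 * R - 1)) <= 62/10) by (apply (T_bound R 4); lra).
    assert (I : / 3 <= / m) by (apply Rinv_le_contravar; lra).
    assert (E : ln (7/3) <= ln (2 + / m)) by (apply ln_mono; lra). lra. }
  destruct (Rle_dec (1/2) m).
  { assert (T : 2 * (14143 / 10000 * R / (7071 / 10000 * R - 1)) <= 76/10) by (apply (T_bound R 3); lra).
    assert (I : / 1 <= / m) by (apply Rinv_le_contravar; lra). rewrite Rinv_1 in I.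
    assert (E : ln 3 <= ln (2 + / m)) by (apply ln_mono; lra). lra. }
  destruct (Rle_dec (1/4) m).
  { assert (T : 2 * (14143 / 10000 * R / (7071 / 10000 * R - 1)) <= 93/10) by (apply (T_bound R (5/2)); lra).
    assert (I : / (1/2) <= / m) by (apply Rinv_le_contravar; lra).
    replace (/ (1/2)) with 2 in I by field.
    assert (E : ln 4 <= ln (2 + / m)) by (apply ln_mono; lra). rewrite ln4 in E. lra. }
  { assert (T : 2 * (14143 / 10000 * R / (7071 / 10000 * R - 1)) <= 14) by (apply (T_bound R 2); lra).
    assert (I : / (1/4) <= / m) by (apply Rinv_le_contravar; lra).
    replace (/ (1/4)) with 4 in I by field.
    assert (E : ln 6 <= ln (2 + / m)) by (apply ln_mono; lra). rewrite ln6 in E. lra. }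
Qed.

Lemma minmax_facts a b d : Rabs (a - b) <= d ->
  Rmin a b <= a /\ Rmin a b <= b /\ a <= Rmax a b /\ b <= Rmax a b /\ Rmax a b <= Rmin a b + d.
Proof.
  intros H. pose proof (Rle_abs (a - b)). pose proof (Rabs_maj2 (a - b)).
  unfold Rmin, Rmax; destruct Rle_dec; lra.
Qed.

Lemma log_piece R a m d K : 0 < m -> m <= a - 1 -> a < R -> R - 1 <= m + K * d -> 1 <= K -> 0 <= d ->
  ln ((R - 1) / (a - 1)) <= ln K + ln (1 + d / m).
Proof.
  intros Hm Ha HR HRK HK Hd. rewrite <- ln_mult by (try lra; assert (0 <= d / m) by (apply Rmult_le_pos; [lra|left; apply Rinv_0_lt_compat; lra]); lra).
  apply ln_mono. apply Rmult_lt_0_compat; [lra| apply Rinv_0_lt_compat; lra].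
  apply Rle_trans with ((R - 1) / m).
  - unfold Rdiv. apply Rmult_le_compat_l. lra. apply Rinv_le_contravar; lra.
  - replace (K * (1 + d / m)) with ((K * m + K * d) / m) by (field; lra).
    unfold Rdiv. apply Rmult_le_compat_r. left; apply Rinv_0_lt_compat; lra. nra.
Qed.

Lemma caseA n x y eps : 1 < nrm n x -> 1 < nrm n y -> dst n x y <= Rmin (nrm n x) (nrm n y) - 1 -> 0 < eps ->
  exists v, CS n x y v /\ v <= Kup * ln (1 + dst n x y / (Rmin (nrm n x) (nrm n y) - 1)) + eps.
Proof.
  intros Hx Hy Hd He.
  set (m := Rmin (nrm n x) (nrm n y) - 1) in *. set (d := dst n x y) in *.
  assert (Hm : 0 < m) by (unfold m; apply Rlt_Rminus, Rmin_glb_lt; auto).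
  assert (Hd0 : 0 <= d) by apply nrm_ge0.
  destruct (seg_bound n x y (d + eps * m / 2) (1 + m - d / 2)) as [w [Cw Hw]].
  - assert (0 < eps * m / 2) by (apply Rmult_lt_0_compat; [apply Rmult_lt_0_compat|]; lra). lra.
  - assert (0 < eps * m / 2) by (apply Rmult_lt_0_compat; [apply Rmult_lt_0_compat|]; lra). fold d. lra.
  - lra.
  - intros t Ht. pose proof (seg_norm_lb n x y t Ht). fold d in H. unfold m. lra.
  - exists w. split; auto.
    set (t := d / m).
    assert (Ht : 0 <= t <= 1).
    { unfold t. split. apply Rmult_le_pos; [lra|left; apply Rinv_0_lt_compat; lra].
      apply Rmult_le_reg_r with m; auto. unfold Rdiv. rewrite Rmult_assoc, Rinv_l; lra. }
    assert (HJ : t / 2 <= ln (1 + t)).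
    { pose proof (ln_lb1 (1 + t) ltac:(lra)).
      assert (t / 2 <= 1 - / (1 + t)).
      { replace (1 - / (1 + t)) with (t / (1 + t)) by (field; lra).
        unfold Rdiv. apply Rmult_le_compat_l. lra. apply Rinv_le_contravar; lra. }
      lra. }
    assert (Hw2 : (d + eps * m / 2) / (1 + m - d / 2 - 1) <= 2 * t + eps).
    { apply Rle_trans with ((d + eps * m / 2) / (m / 2)).
      - unfold Rdiv. apply Rmult_le_compat_l.
        assert (0 < eps * m / 2) by (apply Rmult_lt_0_compat; [apply Rmult_lt_0_compat|]; lra). lra.
        apply Rinv_le_contravar; lra.
      - unfold t. right. field. lra. }
    unfold Kup. lra.
Qed.

Lemma caseB1 n x y : 1 < nrm n x -> 1 < nrm n y ->
  Rmin (nrm n x) (nrm n y) - 1 < dst n x y -> dst n x y <= Rmin (nrm n x) (nrm n y) ->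
  exists v, CS n x y v /\ v <= Kup * ln (1 + dst n x y / (Rmin (nrm n x) (nrm n y) - 1)).
Proof.
  intros Hx Hy Hd1 Hd2.
  pose proof (nrm_rev n x y) as Hr.
  set (a := nrm n x) in *. set (b := nrm n y) in *. set (d := dst n x y) in *.
  destruct (minmax_facts a b d Hr) as [F1 [F2 [F3 [F4 F5]]]].
  set (m' := Rmin a b) in *. set (M := Rmax a b) in *. set (m := m' - 1).
  assert (Hm : 0 < m) by (unfold m, m'; apply Rlt_Rminus, Rmin_glb_lt; auto).
  assert (Hd0 : 0 < d) by (unfold m in *; lra).
  set (R := M + 3 * d).
  assert (HRpos : 0 < R) by (unfold R; lra).
  set (p := unitv n x). set (q := unitv n y).
  assert (Hp : nrm n p = 1) by (apply nrm_unitv; fold a; lra).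
  assert (Hq : nrm n q = 1) by (apply nrm_unitv; fold b; lra).
  pose proof (cos_rel n x y ltac:(fold a; lra) ltac:(fold b; lra)) as CR. fold a b d p q in CR.
  set (z := d ^ 2 / (2 * m' ^ 2)).
  assert (Hm' : 0 < m') by lra.
  assert (Hab : m' * m' <= a * b) by (apply Rmult_le_compat; lra).
  assert (Hz : 1 - ip n p q <= z).
  { destruct (Rle_dec (1 - ip n p q) 0).
    - unfold z. assert (0 <= d ^ 2 / (2 * m' ^ 2)).
      { apply Rmult_le_pos. apply pow2_ge_0. left; apply Rinv_0_lt_compat; nra. } lra.
    - unfold z. apply Rmult_le_reg_r with (2 * m' ^ 2). nra.
      replace (d ^ 2 / (2 * m' ^ 2) * (2 * m' ^ 2)) with (d^2) by (field; lra).
      apply Rle_trans with (2 * (a * b) * (1 - ip n p q)); auto.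
      replace ((1 - ip n p q) * (2 * m' ^ 2)) with (2 * (m' * m') * (1 - ip n p q)) by ring.
      apply Rmult_le_compat_r. lra. lra. }
  assert (Hz1 : 0 <= z <= 1/2).
  { unfold z. split. apply Rmult_le_pos. apply pow2_ge_0. left; apply Rinv_0_lt_compat; nra.
    apply Rmult_le_reg_r with (2 * m' ^ 2). nra.
    replace (d ^ 2 / (2 * m' ^ 2) * (2 * m' ^ 2)) with (d^2) by (field; lra). nra. }
  set (L := R * d / m').
  assert (HR5 : R <= 5 * m') by (unfold R; lra).
  assert (HL : 0 < L) by (unfold L, R; apply Rmult_lt_0_compat; [nra| apply Rinv_0_lt_compat; lra]).
  assert (HLz : R ^ 2 * (2 * z) <= L ^ 2) by (unfold L, z; right; field; lra).
  assert (Hrz : R * z / 2 <= 5 * d / 4).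
  { unfold z. replace (R * (d ^ 2 / (2 * m' ^ 2)) / 2) with ((R * d) * d / (4 * (m' * m'))) by (field; lra).
    apply Rmult_le_reg_r with (4 * (m' * m')). nra.
    replace (R * d * d / (4 * (m' * m')) * (4 * (m' * m'))) with (R * d * d) by (field; lra).
    assert (R * d <= 5 * m' * d) by (apply Rmult_le_compat_r; lra).
    assert (R * d * d <= 5 * m' * d * m') by (apply Rmult_le_compat; try lra; apply Rmult_le_pos; lra).
    nra. }
  assert (Hrho : 7 * d / 4 <= R * (1 - z / 2) - 1).
  { replace (R * (1 - z / 2)) with (R - R * z / 2) by field. unfold R, m in *. lra. }
  destruct (chord_narrow n p q R L z Hp Hq HL Hz Hz1 HLz ltac:(lra)) as [w [Cw Hw]].
  exists (ln ((R - 1) / (a - 1)) + w + ln ((R - 1) / (b - 1))). split.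
  - apply three_piece. fold a; unfold R; lra. fold b; unfold R; lra. exact Cw.
  - assert (Hw2 : w <= 20 / 7).
    { apply Rle_trans with (L / (7 * d / 4)).
      - apply Rle_trans with (L / (R * (1 - z / 2) - 1)); auto.
        unfold Rdiv. apply Rmult_le_compat_l. lra. apply Rinv_le_contravar; lra.
      - unfold L. replace (R * d / m' / (7 * d / 4)) with (4 * R / (7 * m')) by (field; lra).
        apply Rmult_le_reg_r with (7 * m'). lra.
        replace (4 * R / (7 * m') * (7 * m')) with (4 * R) by (field; lra). lra. }
    assert (La : ln ((R - 1) / (a - 1)) <= ln 4 + ln (1 + d / m)).
    { apply log_piece; unfold m, R in *; lra. }
    assert (Lb : ln ((R - 1) / (b - 1)) <= ln 4 + ln (1 + d / m)).
    { apply log_piece; unfold m, R in *; lra. }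
    assert (HJ : ln 2 <= ln (1 + d / m)).
    { apply ln_mono. lra. assert (1 <= d / m).
      { apply Rmult_le_reg_r with m; auto. unfold Rdiv. rewrite Rmult_assoc, Rinv_l by lra. unfold m; lra. } lra. }
    rewrite ln4 in La, Lb. pose proof ln2_ub. pose proof ln2_lb. unfold m in *. unfold Kup. lra.
Qed.

Lemma caseB2 n x y : (2 <= n)%nat -> 1 < nrm n x -> 1 < nrm n y ->
  Rmin (nrm n x) (nrm n y) < dst n x y ->
  exists v, CS n x y v /\ v <= Kup * ln (1 + dst n x y / (Rmin (nrm n x) (nrm n y) - 1)).
Proof.
  intros Hn Hx Hy Hd1.
  pose proof (nrm_rev n x y) as Hr.
  set (a := nrm n x) in *. set (b := nrm n y) in *. set (d := dst n x y) in *.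
  destruct (minmax_facts a b d Hr) as [F1 [F2 [F3 [F4 F5]]]].
  set (m' := Rmin a b) in *. set (M := Rmax a b) in *. set (m := m' - 1).
  assert (Hm : 0 < m) by (unfold m, m'; apply Rlt_Rminus, Rmin_glb_lt; auto).
  set (R := M + d).
  set (p := unitv n x). set (q := unitv n y).
  assert (Hp : nrm n p = 1) by (apply nrm_unitv; fold a; lra).
  assert (Hq : nrm n q = 1) by (apply nrm_unitv; fold b; lra).
  destruct (exists_w n p q Hn Hp Hq) as [u [Hu [Hpu Huq]]].
  assert (HR2 : 2 * (1 + m) <= R) by (unfold R, m; lra).
  destruct (chord_wide n p u R Hp Hu Hpu ltac:(unfold m in *; lra)) as [w1 [C1 H1]].
  destruct (chord_wide n u q R Hu Hq Huq ltac:(unfold m in *; lra)) as [w2 [C2 H2]].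
  exists (ln ((R - 1) / (a - 1)) + (w1 + w2) + ln ((R - 1) / (b - 1))). split.
  - apply three_piece. fold a; unfold R; lra. fold b; unfold R; lra. apply CS_concat with (sc R u); auto.
  - assert (La : ln ((R - 1) / (a - 1)) <= ln 2 + ln (1 + d / m)).
    { apply log_piece; unfold m, R in *; lra. }
    assert (Lb : ln ((R - 1) / (b - 1)) <= ln 2 + ln (1 + d / m)).
    { apply log_piece; unfold m, R in *; lra. }
    assert (HJ : ln (2 + / m) <= ln (1 + d / m)).
    { apply ln_mono. assert (0 < / m) by (apply Rinv_0_lt_compat; lra). lra.
      replace (2 + / m) with (1 + (m + 1) / m) by (field; lra).
      apply Rplus_le_compat_l. unfold Rdiv. apply Rmult_le_compat_r. left; apply Rinv_0_lt_compat; lra.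
      unfold m in *. lra. }
    pose proof (B2_num m R (ln (1 + d / m)) Hm HR2 HJ).
    unfold m in *. unfold Kup. lra.
Qed.

Lemma jG_eq n x y : G n x -> G n y ->
  jG n (G n) x y = ln (1 + dst n x y / (Rmin (nrm n x) (nrm n y) - 1)).
Proof.
  intros Hx Hy. unfold jG. rewrite !dG_eq by auto. rewrite dist_dst. f_equal. f_equal. f_equal.
  unfold Rmin. repeat destruct Rle_dec; lra.
Qed.

Lemma upper_eps n x y eps : (2 <= n)%nat -> G n x -> G n y -> 0 < eps ->
  exists v, CS n x y v /\ v <= Kup * ln (1 + dst n x y / (Rmin (nrm n x) (nrm n y) - 1)) + eps.
Proof.
  intros Hn Hx Hy He. apply G_nrm in Hx. apply G_nrm in Hy.
  destruct (Rle_dec (dst n x y) (Rmin (nrm n x) (nrm n y) - 1)).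
  - apply caseA; auto.
  - destruct (Rle_dec (dst n x y) (Rmin (nrm n x) (nrm n y))).
    + destruct (caseB1 n x y) as [v [C Hv]]; auto; try lra. exists v; split; auto; lra.
    + destruct (caseB2 n x y) as [v [C Hv]]; auto; try lra. exists v; split; auto; lra.
Qed.

Lemma kG_upper n x y : (2 <= n)%nat -> G n x -> G n y -> kG n (G n) x y <= Kup * jG n (G n) x y.
Proof.
  intros Hn Hx Hy. rewrite kG_CS, jG_eq by auto.
  apply Inf_le_eps. apply CS_bdd. intros eps He. apply upper_eps; auto.
Qed.

Lemma CS_nonempty n x y : (2 <= n)%nat -> G n x -> G n y -> exists v, CS n x y v.
Proof.
  intros Hn Hx Hy. destruct (upper_eps n x y 1 Hn Hx Hy ltac:(lra)) as [v [C _]]. eauto.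
Qed.

Lemma jG_nonneg n x y : G n x -> G n y -> 0 <= jG n (G n) x y.
Proof.
  intros Hx Hy. rewrite jG_eq by auto. apply G_nrm in Hx. apply G_nrm in Hy.
  rewrite <- ln_1. apply ln_mono. lra.
  assert (0 < Rmin (nrm n x) (nrm n y) - 1) by (apply Rlt_0_minus, Rmin_glb_lt; auto).
  assert (0 <= dst n x y / (Rmin (nrm n x) (nrm n y) - 1)).
  { apply Rmult_le_pos. apply nrm_ge0. left; apply Rinv_0_lt_compat; auto. }
  lra.
Qed.

Lemma ln3_pos : 0 < ln 3.
Proof. pose proof ln3_lb. lra. Qed.

Lemma Kup_le : Kup <= 4 * PI / ln 3.
Proof.
  pose proof PI_lb. pose proof ln3_ub. pose proof ln3_pos.
  apply Rmult_le_reg_r with (ln 3); auto. unfold Rdiv. rewrite Rmult_assoc, Rinv_l by lra.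
  unfold Kup. nra.
Qed.

Lemma unif_upper n : (2 <= n)%nat -> unif_const n (ext_ball n) (4 * PI / ln 3).
Proof.
  intros Hn. split.
  - pose proof Kup_le. unfold Kup in H. lra.
  - intros x y Hx Hy. change (kG n (G n) x y <= 4 * PI / ln 3 * jG n (G n) x y).
    eapply Rle_trans. apply kG_upper; auto.
    apply Rmult_le_compat_r. apply jG_nonneg; auto. apply Kup_le.
Qed.

Lemma kG_antipodal n r : (2 <= n)%nat -> 1 < r -> PI <= kG n (G n) (sc r e0) (sc (- r) e0).
Proof.
  intros Hn Hr.
  assert (Gx : G n (sc r e0)). { apply G_nrm. rewrite nrm_sc_e0 by lia. rewrite Rabs_pos_eq; lra. }
  assert (Gy : G n (sc (-r) e0)). { apply G_nrm. rewrite nrm_sc_e0 by lia. rewrite Rabs_Ropp, Rabs_pos_eq; lra. }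
  rewrite kG_CS. apply Inf_ge. apply CS_nonempty; auto.
  intros v C. rewrite <- (ang_antipodal n r) by (lia || lra). apply (CS_ge_ang n _ _ v C).
Qed.

Lemma jG_antipodal n r : (2 <= n)%nat -> 1 < r ->
  jG n (G n) (sc r e0) (sc (- r) e0) = ln (1 + 2 * r / (r - 1)).
Proof.
  intros Hn Hr.
  assert (Gx : G n (sc r e0)). { apply G_nrm. rewrite nrm_sc_e0 by lia. rewrite Rabs_pos_eq; lra. }
  assert (Gy : G n (sc (-r) e0)). { apply G_nrm. rewrite nrm_sc_e0 by lia. rewrite Rabs_Ropp, Rabs_pos_eq; lra. }
  rewrite jG_eq by auto. rewrite !nrm_sc_e0 by lia. rewrite Rabs_Ropp, Rabs_pos_eq by lra.
  replace (dst n (sc r e0) (sc (- r) e0)) with (2 * r).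
  - rewrite Rmin_left by lra. reflexivity.
  - unfold dst. replace (fun i => sc r e0 i - sc (- r) e0 i) with (sc (2 * r) e0).
    rewrite nrm_sc_e0 by lia. rewrite Rabs_pos_eq; lra.
    unfold sc. apply functional_extensionality; intros; ring.
Qed.

Lemma unif_lower n A : (2 <= n)%nat -> unif_const n (ext_ball n) A -> PI / ln 3 <= A.
Proof.
  intros Hn [HA1 HA].
  assert (Hr : forall r, 1 < r -> PI <= A * ln (1 + 2 * r / (r - 1))).
  { intros r Hr. rewrite <- (jG_antipodal n r) by auto.
    assert (Gx : G n (sc r e0)). { apply G_nrm. rewrite nrm_sc_e0 by lia. rewrite Rabs_pos_eq; lra. }
    assert (Gy : G n (sc (-r) e0)). { apply G_nrm. rewrite nrm_sc_e0 by lia. rewrite Rabs_Ropp, Rabs_pos_eq; lra. }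
    apply Rle_trans with (kG n (G n) (sc r e0) (sc (-r) e0)). apply kG_antipodal; auto. apply HA; auto. }
  pose proof ln3_pos.
  apply Rmult_le_reg_r with (ln 3); auto. unfold Rdiv. rewrite Rmult_assoc, Rinv_l by lra. rewrite Rmult_1_r.
  destruct (Rle_dec PI (A * ln 3)) as [h|h]; [lra|]. exfalso.
  set (e := PI - A * ln 3).
  assert (He : 0 < e) by (unfold e; lra).
  set (r := 1 + 2 * A / e).
  assert (Hr1 : 1 < r). { unfold r. assert (0 < 2 * A / e) by (apply Rmult_lt_0_compat; [lra| apply Rinv_0_lt_compat; lra]). lra. }
  specialize (Hr r Hr1).
  assert (E : 1 + 2 * r / (r - 1) = 3 * (1 + e / (3 * A))).
  { unfold r. field. split; lra. }
  rewrite E, ln_mult in Hr.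
  - assert (Q1 : ln (1 + e / (3 * A)) <= e / (3 * A)).
    { apply ln_le_x. apply Rmult_le_pos; [lra| left; apply Rinv_0_lt_compat; lra]. }
    assert (Q2 : A * (e / (3 * A)) = e / 3) by (field; lra).
    assert (A * ln (1 + e / (3 * A)) <= e / 3).
    { rewrite <- Q2. apply Rmult_le_compat_l; lra. }
    rewrite Rmult_plus_distr_l in Hr. unfold e in *. lra.
  - lra.
  - assert (0 <= e / (3 * A)) by (apply Rmult_le_pos; [lra| left; apply Rinv_0_lt_compat; lra]). lra.
Qed.

Theorem mainTheorem18 (n : nat) (hn : (2 <= n)%nat) :
  uniform n (ext_ball n) /\
  PI / ln 3 <= AG n (ext_ball n) /\ AG n (ext_ball n) <= 4 * PI / ln 3.
Proof.
  pose proof (unif_upper n hn) as U.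
  split; [exists (4 * PI / ln 3); exact U|].
  split.
  - unfold AG. apply Inf_ge. eauto. intros A HA. apply unif_lower with n; auto.
  - unfold AG. apply Inf_le. exists 1. intros A [HA _]. exact HA. exact U.
Qed.
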